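(* Let $p>0$, $k>0$ and $q=p\,e^{-2k^2}$ with $0<pq<1$, let $\zeta\in\mathbb R$, $\varrho\in\mathbb C$, $t\in\mathbb C$, $x\in\mathbb R$, and assume $p\,e^{-(2\zeta-(\operatorname{Im}\varrho)^2)k^2}<1$. Then $$E^{(\zeta+\varrho^2/2)}_{p,q}\big(te^{-\varrho kx}\big)e^{-x^2/2}=\frac1{\sqrt{2\pi}}\int_{-\infty}^{\infty}e^{ixy-y^2/2}E^{(\zeta)}_{p,q}\big(te^{i\varrho ky}\big)\,dy,$$ where for complex $s$ we set $E^{(s)}_{p,q}(z)=\sum_{n\ge0}e^{-s k^2n^2}\frac{z^n}{[p,q;p,q]_n}$ (which agrees with the definition below when $s$ is real, since $q/p=e^{-2k^2}$).
   Context: $[p,q;p,q]_n=\prod_{l=1}^n(p^{-l}-q^l)$ ($=1$ for $n=0$). For real $\zeta$, $E^{(\zeta)}_{p,q}(z)=\sum_{n\ge0}\big(\frac qp\big)^{\zeta n^2/2}\frac{z^n}{[p,q;p,q]_n}$. *)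

(* Defs.v *)
From Stdlib Require Import Reals.
Open Scope R_scope.

Definition Cx := (R * R)%type.
Definition Cre (z : Cx) : R := fst z.
Definition Cim (z : Cx) : R := snd z.
Definition RtoC (a : R) : Cx := (a, 0).
Definition Ci : Cx := (0, 1).
Definition Cadd (z w : Cx) : Cx := (fst z + fst w, snd z + snd w).
Definition Copp (z : Cx) : Cx := (- fst z, - snd z).
Definition Cmul (z w : Cx) : Cx :=
  (fst z * fst w - snd z * snd w, fst z * snd w + snd z * fst w).
Definition Cscale (a : R) (z : Cx) : Cx := (a * fst z, a * snd z).
Definition Cnorm (z : Cx) : R := sqrt (fst z * fst z + snd z * snd z).
Definition Cexp (z : Cx) : Cx := (exp (fst z) * cos (snd z), exp (fst z) * sin (snd z)).
Fixpoint Cpow (z : Cx) (n : nat) : Cx :=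
  match n with O => (1, 0) | S m => Cmul z (Cpow z m) end.

Definition Ccv (u : nat -> Cx) (l : Cx) : Prop :=
  forall eps : R, eps > 0 -> exists N : nat, forall n : nat, (n >= N)%nat ->
    Cnorm (Cadd (u n) (Copp l)) < eps.

Fixpoint Cpartial (a : nat -> Cx) (n : nat) : Cx :=
  match n with O => a O | S m => Cadd (Cpartial a m) (a (S m)) end.
Definition Csums (a : nat -> Cx) (l : Cx) : Prop := Ccv (Cpartial a) l.

(* [p,q;p,q]_n = prod_{l=1}^n (p^{-l} - q^l) *)
Fixpoint pqfact (p q : R) (n : nat) : R :=
  match n with
  | O => 1
  | S m => pqfact p q m * (/ p ^ (S m) - q ^ (S m))
  end.

Definition Eterm (k p q : R) (s z : Cx) (n : nat) : Cx :=
  Cscale (/ pqfact p q n)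
    (Cmul (Cexp (Cscale (- (k ^ 2 * INR n ^ 2)) s)) (Cpow z n)).

Definition E_is (k p q : R) (s z v : Cx) : Prop := Csums (Eterm k p q s z) v.

Definition is_RInt (g : R -> R) (a b v : R) : Prop :=
  exists pr : Riemann_integrable g a b, RiemannInt pr = v.

Definition C_RInt (f : R -> Cx) (a b : R) (v : Cx) : Prop :=
  is_RInt (fun y => fst (f y)) a b (fst v) /\ is_RInt (fun y => snd (f y)) a b (snd v).

Definition C_improper (f : R -> Cx) (I : Cx) : Prop :=
  (forall a b : R, a <= b -> exists v : Cx, C_RInt f a b v) /\
  (forall eps : R, eps > 0 -> exists M : R, forall a b : R, forall v : Cx,
     a <= - M -> M <= b -> C_RInt f a b v -> Cnorm (Cadd v (Copp I)) < eps).

(* Main.v *)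
Require Import Defs.
From Stdlib Require Import Reals Lra Lia Psatz FunctionalExtensionality Factorial ClassicalEpsilon.
Open Scope R_scope.

Lemma is_RInt_ext f g a b v : (forall x, f x = g x) -> is_RInt f a b v -> is_RInt g a b v.
Proof. intros H; replace g with f by (apply functional_extensionality; auto); auto. Qed.

Lemma is_RInt_unique f a b v w : is_RInt f a b v -> is_RInt f a b w -> v = w.
Proof. intros [p1 <-] [p2 <-]; apply RiemannInt_P5. Qed.

Lemma is_RInt_lin f g a b l u v : is_RInt f a b u -> is_RInt g a b v ->
  is_RInt (fun x => f x + l * g x) a b (u + l * v).
Proof. intros [p1 <-] [p2 <-]. exists (@RiemannInt_P10 f g a b l p1 p2). apply RiemannInt_P13. Qed.

Lemma is_RInt_const c a b : is_RInt (fun _ => c) a b (c * (b - a)).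
Proof. exists (RiemannInt_P14 a b c). apply RiemannInt_P15. Qed.

Lemma is_RInt_scal f a b l u : is_RInt f a b u -> is_RInt (fun x => l * f x) a b (l * u).
Proof. intros H. generalize (is_RInt_lin _ _ _ _ l _ _ (is_RInt_const 0 a b) H).
 intros H2. apply is_RInt_ext with (f := fun x => 0 + l * f x). intros; ring.
 replace (l*u) with (0*(b-a) + l*u) by ring. auto. Qed.

Lemma is_RInt_add f g a b u v : is_RInt f a b u -> is_RInt g a b v ->
  is_RInt (fun x => f x + g x) a b (u + v).
Proof. intros H1 H2. generalize (is_RInt_lin _ _ _ _ 1 _ _ H1 H2). intros H.
 replace (u+v) with (u + 1*v) by ring. apply is_RInt_ext with (2 := H). intros; ring. Qed.

Lemma is_RInt_sub f g a b u v : is_RInt f a b u -> is_RInt g a b v ->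
  is_RInt (fun x => f x - g x) a b (u - v).
Proof. intros H1 H2. generalize (is_RInt_lin _ _ _ _ (-1) _ _ H1 H2). intros H.
 replace (u-v) with (u + (-1)*v) by ring. apply is_RInt_ext with (2 := H). intros; ring. Qed.

Lemma is_RInt_chasles f a b c u v : is_RInt f a b u -> is_RInt f b c v -> is_RInt f a c (u + v).
Proof. intros [p1 <-] [p2 <-]. exists (RiemannInt_P24 p1 p2). symmetry; apply RiemannInt_P26. Qed.

Lemma is_RInt_rev f a b u : is_RInt f a b u -> is_RInt f b a (- u).
Proof. intros [p1 <-]. exists (RiemannInt_P1 p1). rewrite (RiemannInt_P8 p1 (RiemannInt_P1 p1)). ring. Qed.

Lemma is_RInt_mono f g a b u v : a <= b -> (forall x, a < x < b -> f x <= g x) ->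
  is_RInt f a b u -> is_RInt g a b v -> u <= v.
Proof. intros Hab H [p1 <-] [p2 <-]. apply RiemannInt_P19; auto. Qed.

Lemma is_RInt_abs_le f g a b u v : a <= b -> (forall x, a < x < b -> Rabs (f x) <= g x) ->
  is_RInt f a b u -> is_RInt g a b v -> Rabs u <= v.
Proof. intros Hab H [p1 <-] [p2 <-].
 pose proof (RiemannInt_P16 p1) as p3.
 apply Rle_trans with (RiemannInt p3). apply RiemannInt_P17; auto.
 apply RiemannInt_P19; auto. Qed.

Lemma cont_int f (H : continuity f) a b : Riemann_integrable f a b.
Proof. destruct (Rle_dec a b) as [h|h].
 apply continuity_implies_RiemannInt; auto.
 apply RiemannInt_P1. apply continuity_implies_RiemannInt; auto; lra. Qed.

Definition RintC f (H : continuity f) (a b : R) : R := RiemannInt (cont_int f H a b).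

Lemma RintC_is f (H : continuity f) a b : is_RInt f a b (RintC f H a b).
Proof. exists (cont_int f H a b); reflexivity. Qed.

Lemma cont_is_RInt f a b : continuity f -> exists v, is_RInt f a b v.
Proof. intros H; exists (RintC f H a b); apply RintC_is. Qed.

Lemma FTC_le f F a b : a <= b -> continuity f -> (forall x, derivable_pt_lim F x (f x)) ->
  is_RInt f a b (F b - F a).
Proof. intros hab Hc HF.
 assert (C0 : forall x, a <= x <= b -> continuity_pt f x) by (intros; apply Hc).
 set (P := primitive hab (FTC_P1 hab C0)).
 assert (A1 := RiemannInt_P29 hab C0).
 assert (A2 : antiderivative f F a b).
 { split; auto. intros x _. exists (exist _ (f x) (HF x)). reflexivity. }
 destruct (antiderivative_Ucte _ _ _ _ _ A2 A1) as [c Hc'].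
 exists (continuity_implies_RiemannInt hab C0).
 rewrite (RiemannInt_P20 hab (FTC_P1 hab C0) (continuity_implies_RiemannInt hab C0)).
 rewrite (Hc' a), (Hc' b) by lra. fold P. ring. Qed.

Lemma FTC f F a b : continuity f -> (forall x, derivable_pt_lim F x (f x)) ->
  is_RInt f a b (F b - F a).
Proof. intros Hc HF. destruct (Rle_dec a b).
 apply FTC_le; auto.
 replace (F b - F a) with (- (F a - F b)) by ring. apply is_RInt_rev, FTC_le; auto; lra. Qed.

Lemma derivable_pt_lim_loc g h x l : (exists d, 0 < d /\ forall y, Rabs (y - x) < d -> g y = h y) ->
  derivable_pt_lim h x l -> derivable_pt_lim g x l.
Proof. intros [d [Hd E]] H eps Heps. destruct (H eps Heps) as [del Hdel].
 assert (Hm : 0 < Rmin del d) by (apply Rmin_pos; [apply del | lra]).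
 exists (mkposreal _ Hm). intros hh Hh0 Hh. simpl in Hh.
 rewrite (E (x+hh)), (E x). apply Hdel; auto. apply Rlt_le_trans with (1 := Hh), Rmin_l.
 rewrite Rminus_diag, Rabs_R0; lra.
 replace (x+hh-x) with hh by ring. apply Rlt_le_trans with (1 := Hh), Rmin_r. Qed.

Lemma RintC_deriv f (H : continuity f) c x : derivable_pt_lim (fun t => RintC f H c t) x (f x).
Proof.
 assert (hab : x - 1 <= x + 1) by lra.
 assert (C0 : forall y, x - 1 <= y <= x + 1 -> continuity_pt f y) by (intros; apply H).
 set (pr := FTC_P1 hab C0).
 apply derivable_pt_lim_loc with (h := fun t => RintC f H c (x-1) + primitive hab pr t).
 - exists 1; split; [lra|]. intros y Hy.
   assert (Hy' : x - 1 <= y <= x + 1) by (apply Rabs_def2 in Hy; lra).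
   unfold primitive. destruct (Rle_dec (x-1) y) as [r|r]; [|lra].
   destruct (Rle_dec y (x+1)) as [r0|r0]; [|lra].
   apply (is_RInt_unique f c y).
   apply RintC_is.
   apply is_RInt_chasles with (x-1). apply RintC_is. exists (pr y r r0); reflexivity.
 - replace (f x) with (0 + f x) by ring. apply derivable_pt_lim_plus.
   apply derivable_pt_lim_const. apply RiemannInt_P27. lra. Qed.

Lemma dlin lam mu x : derivable_pt_lim (fun u => lam*u+mu) x lam.
Proof. intros eps He. exists (mkposreal eps He). intros h Hh _.
 replace ((lam*(x+h)+mu - (lam*x+mu))/h - lam) with 0 by (field; auto). rewrite Rabs_R0; auto. Qed.

Lemma is_RInt_subst f a b lam mu v : continuity f ->
  is_RInt f (lam * a + mu) (lam * b + mu) v ->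
  is_RInt (fun u => lam * f (lam * u + mu)) a b v.
Proof. intros Hc Hv.
 set (Phi := fun t => RintC f Hc 0 t).
 assert (E := FTC f Phi (lam*a+mu) (lam*b+mu) Hc (RintC_deriv f Hc 0)).
 rewrite (is_RInt_unique _ _ _ _ _ Hv E).
 apply (FTC (fun u => lam * f (lam*u+mu)) (fun u => Phi (lam*u+mu))).
 - intros x. apply continuity_pt_mult. apply continuity_pt_const; intros ? ?; auto.
   apply (continuity_pt_comp (fun u => lam*u+mu) f). reg. apply Hc.
 - intros x. replace (lam * f (lam*x+mu)) with (f (lam*x+mu) * lam) by ring.
   apply (derivable_pt_lim_comp (fun u => lam*u+mu) Phi).
   apply dlin.
   apply RintC_deriv. Qed.

Definition Rimp (f : R -> R) (I : R) : Prop :=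
  forall eps, eps > 0 -> exists M, forall a b v, a <= -M -> M <= b -> is_RInt f a b v -> Rabs (v - I) < eps.

Lemma cont_pt_intro f x0 : (forall eps, eps > 0 -> exists d, d > 0 /\ forall x, Rabs (x - x0) < d -> Rabs (f x - f x0) < eps) -> continuity_pt f x0.
Proof. intros H eps He. destruct (H eps He) as [d [Hd Hx]]. exists d; split; auto.
 intros x [_ Hxd]. simpl in *. unfold R_dist in *. apply Hx; auto. Qed.

Lemma cont_pt_elim f x0 : continuity_pt f x0 -> forall eps, eps > 0 -> exists d, d > 0 /\ forall x, Rabs (x - x0) < d -> Rabs (f x - f x0) < eps.
Proof. intros H eps He. destruct (H eps He) as [d [Hd Hx]]. exists d; split; auto.
 intros x Hxd. destruct (Req_dec x x0) as [->|Hne]. rewrite Rminus_diag, Rabs_R0; lra.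
 apply (Hx x). split. split; [constructor|auto]. simpl; unfold R_dist; auto. Qed.

Lemma is_RInt_zero a b : is_RInt (fun _ => 0) a b 0.
Proof. pose proof (is_RInt_const 0 a b) as H; rewrite Rmult_0_l in H; exact H. Qed.

Lemma Rabs_le_inv x y : Rabs x <= y -> -y <= x <= y.
Proof. unfold Rabs; destruct (Rcase_abs x); intros; lra. Qed.

Lemma lim_le (u w : nat -> R) l l' K : Un_cv u l -> Un_cv w l' -> (forall n, (n >= K)%nat -> u n <= w n) -> l <= l'.
Proof. intros Hu Hw H. destruct (Rle_dec l l') as [|Hn]; auto. exfalso.
 assert (He : (l - l')/2 > 0) by lra.
 destruct (Hu _ He) as [N1 H1]. destruct (Hw _ He) as [N2 H2].
 set (n := (N1 + N2 + K)%nat). specialize (H1 n ltac:(lia)). specialize (H2 n ltac:(lia)).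
 specialize (H n ltac:(lia)). unfold Rdist in *. apply Rabs_def2 in H1. apply Rabs_def2 in H2. lra. Qed.

Lemma cv_const c : Un_cv (fun _ => c) c.
Proof. intros eps He; exists 0%nat; intros; unfold Rdist; rewrite Rminus_diag, Rabs_R0; auto. Qed.

Lemma cv_shift_sub (u : nat -> R) l c : Un_cv u l -> Un_cv (fun n => u n - c) (l - c).
Proof. intros H. apply (CV_minus u (fun _ => c)); auto. apply cv_const. Qed.

Lemma sum_nonneg_growing b : (forall n, 0 <= b n) -> Un_growing (fun N => sum_f_R0 b N).
Proof. intros H n. simpl. specialize (H (S n)). lra. Qed.

Lemma sum_le_lim b B N : (forall n, 0 <= b n) -> Un_cv (fun N => sum_f_R0 b N) B -> sum_f_R0 b N <= B.
Proof. intros H Hc. apply (growing_ineq (fun N => sum_f_R0 b N)); auto. apply sum_nonneg_growing; auto. Qed.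

Lemma sum_diff_bound (a b : nat -> R) N K : (forall n, Rabs (a n) <= b n) -> (N <= K)%nat ->
  Rabs (sum_f_R0 a K - sum_f_R0 a N) <= sum_f_R0 b K - sum_f_R0 b N.
Proof. intros H HK. induction HK. rewrite !Rminus_diag, Rabs_R0; lra.
 simpl. replace (sum_f_R0 a m + a (S m) - sum_f_R0 a N) with ((sum_f_R0 a m - sum_f_R0 a N) + a (S m)) by ring.
 eapply Rle_trans. apply Rabs_triang. specialize (H (S m)). lra. Qed.

Lemma sum_tail_bound (a b : nat -> R) S B N : (forall n, Rabs (a n) <= b n) ->
  Un_cv (fun N => sum_f_R0 a N) S -> Un_cv (fun N => sum_f_R0 b N) B ->
  Rabs (S - sum_f_R0 a N) <= B - sum_f_R0 b N.
Proof. intros H Ha Hb. apply Rabs_le. split.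
 - cut (sum_f_R0 a N - S <= B - sum_f_R0 b N). lra.
   apply (lim_le (fun K => sum_f_R0 a N - sum_f_R0 a K) (fun K => sum_f_R0 b K - sum_f_R0 b N) _ _ N).
   apply (CV_minus (fun _ => sum_f_R0 a N) (fun K => sum_f_R0 a K)). apply cv_const. auto.
   apply cv_shift_sub; auto.
   intros n Hn. pose proof (sum_diff_bound a b N n H Hn). apply Rabs_le_inv in H0. lra.
 - apply (lim_le (fun K => sum_f_R0 a K - sum_f_R0 a N) (fun K => sum_f_R0 b K - sum_f_R0 b N) _ _ N).
   apply cv_shift_sub; auto. apply cv_shift_sub; auto.
   intros n Hn. pose proof (sum_diff_bound a b N n H Hn). apply Rabs_le_inv in H0. lra. Qed.

Lemma abs_conv (a b : nat -> R) B : (forall n, Rabs (a n) <= b n) -> Un_cv (fun N => sum_f_R0 b N) B ->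
  exists S, Un_cv (fun N => sum_f_R0 a N) S.
Proof. intros H Hb.
 destruct (Rseries_CV_comp (fun n => Rabs (a n)) b) as [l Hl].
 intros n; split; [apply Rabs_pos | auto]. exists B; auto.
 destruct (cv_cauchy_2 a) as [S HS]. apply cauchy_abs. apply cv_cauchy_1. exists l; auto.
 exists S; auto. Qed.

Lemma sum_const_bound (c : nat -> R) d N : (forall n, (n <= N)%nat -> Rabs (c n) <= d) ->
  Rabs (sum_f_R0 c N) <= (INR N + 1) * d.
Proof. induction N; intros H. simpl. specialize (H 0%nat (le_n _)). lra.
 simpl sum_f_R0. eapply Rle_trans. apply Rabs_triang. rewrite S_INR.
 assert (Rabs (sum_f_R0 c N) <= (INR N + 1) * d) by (apply IHN; intros; apply H; lia).
 specialize (H (S N) (le_n _)). lra. Qed.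

Lemma finite_M (P : nat -> R -> Prop) : (forall n M M', M <= M' -> P n M -> P n M') ->
  (forall n, exists M, P n M) -> forall N, exists M, forall n, (n <= N)%nat -> P n M.
Proof. intros Hm H N. induction N.
 - destruct (H 0%nat) as [M HM]. exists M. intros n Hn. replace n with 0%nat by lia. auto.
 - destruct IHN as [M1 H1]. destruct (H (S N)) as [M2 H2]. exists (Rmax M1 M2).
   intros n Hn. destruct (Nat.eq_dec n (S N)) as [->|Hne].
   apply (Hm _ M2). apply Rmax_r. auto. apply (Hm _ M1). apply Rmax_l. apply H1; lia. Qed.

Lemma cont_sum (f : nat -> R -> R) K : (forall n, continuity (f n)) -> continuity (fun y => sum_f_R0 (fun n => f n y) K).
Proof. intros H. induction K. simpl. apply H. simpl. apply (continuity_plus (fun y => sum_f_R0 (fun n => f n y) K) (f (S K))); auto. Qed.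

Lemma is_RInt_sum (f : nat -> R -> R) (v : nat -> R) a b K : (forall n, is_RInt (f n) a b (v n)) ->
  is_RInt (fun y => sum_f_R0 (fun n => f n y) K) a b (sum_f_R0 v K).
Proof. intros H. induction K. simpl. apply H. simpl. apply (is_RInt_add (fun y => sum_f_R0 (fun n => f n y) K) (f (S K))); auto. Qed.

Lemma Rimp_bound f I beta : continuity f -> Rimp f I -> (forall a b v, a <= b -> is_RInt f a b v -> Rabs v <= beta) -> Rabs I <= beta.
Proof. intros Hc Hi Hb. apply Rnot_lt_le. intros Hlt.
 assert (He : (Rabs I - beta) > 0) by lra. destruct (Hi _ He) as [M HM].
 set (M' := Rabs M). destruct (cont_is_RInt f (-M') M' Hc) as [v Hv].
 assert (HM1 : -M' <= M') by (unfold M'; pose proof (Rabs_pos M); lra).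
 assert (HM2 : -M' <= - M) by (unfold M'; pose proof (Rle_abs M); lra).
 assert (HM3 : M <= M') by (apply Rle_abs).
 assert (Hvb := Hb _ _ _ HM1 Hv).
 assert (Hvi := HM (-M') M' v HM2 HM3 Hv).
 pose proof (Rabs_triang_inv I v). rewrite <- Rabs_Ropp in Hvi. replace (- (v - I)) with (I - v) in Hvi by ring. lra. Qed.

Lemma Rimp_le f I a b v : continuity f -> (forall x, 0 <= f x) -> Rimp f I -> a <= b -> is_RInt f a b v -> v <= I.
Proof. intros Hc Hp Hi Hab Hv. apply Rnot_lt_le. intros Hlt.
 assert (He : v - I > 0) by lra. destruct (Hi _ He) as [M HM].
 set (A := Rmin a (- Rabs M)). set (B := Rmax b (Rabs M)).
 destruct (cont_is_RInt f A a Hc) as [w1 Hw1]. destruct (cont_is_RInt f b B Hc) as [w2 Hw2].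
 assert (H1 : 0 <= w1). { apply (is_RInt_mono (fun _ => 0) f A a 0 w1). apply Rmin_l.
   intros; auto. apply is_RInt_zero. auto. }
 assert (H2 : 0 <= w2). { apply (is_RInt_mono (fun _ => 0) f b B 0 w2). apply Rmax_l.
   intros; auto. apply is_RInt_zero. auto. }
 assert (Hw : is_RInt f A B (w1 + v + w2)).
 { apply is_RInt_chasles with b; auto. apply is_RInt_chasles with a; auto. }
 assert (HA : A <= - M). { unfold A. eapply Rle_trans. apply Rmin_r. pose proof (Rle_abs M) as HH. lra. }
 assert (HB : M <= B). { unfold B. eapply Rle_trans. apply Rle_abs. apply Rmax_r. }
 specialize (HM A B _ HA HB Hw). apply Rabs_def2 in HM. lra. Qed.

Section Tannery.
Variables (f : nat -> R -> R) (F : R -> R) (I beta : nat -> R) (Bsum : R).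
Hypothesis Hc : forall n, continuity (f n).
Hypothesis Hpt : forall y, Un_cv (fun N => sum_f_R0 (fun n => f n y) N) (F y).
Hypothesis Hcomp : forall Rr, exists (m : nat -> R) (mS : R), Un_cv (fun N => sum_f_R0 m N) mS /\
   forall n y, Rabs y <= Rr -> Rabs (f n y) <= m n.
Hypothesis Himp : forall n, Rimp (f n) (I n).
Hypothesis Hb : forall n a b v, a <= b -> is_RInt (f n) a b v -> Rabs v <= beta n.
Hypothesis Hbs : Un_cv (fun N => sum_f_R0 beta N) Bsum.

Lemma tan_unif Rr m mS : Un_cv (fun N => sum_f_R0 m N) mS -> (forall n y, Rabs y <= Rr -> Rabs (f n y) <= m n) ->
  forall y K, Rabs y <= Rr -> Rabs (F y - sum_f_R0 (fun n => f n y) K) <= mS - sum_f_R0 m K.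
Proof. intros Hm Hb' y K Hy. apply sum_tail_bound with (a := fun n => f n y); auto. Qed.

Lemma tan_m_nonneg Rr (m : nat -> R) : 0 <= Rr -> (forall n y, Rabs y <= Rr -> Rabs (f n y) <= m n) -> forall n, 0 <= m n.
Proof. intros HR H n. eapply Rle_trans. apply Rabs_pos. apply (H n 0). rewrite Rabs_R0; auto. Qed.

Lemma tan_cont : continuity F.
Proof. intros y0. apply cont_pt_intro. intros eps He.
 destruct (Hcomp (Rabs y0 + 1)) as [m [mS [Hm Hmb]]].
 assert (Hm0 := tan_m_nonneg (Rabs y0 + 1) m ltac:(pose proof (Rabs_pos y0); lra) Hmb).
 assert (He3 : eps/3 > 0) by lra.
 destruct (Hm _ He3) as [K HK]. specialize (HK K (le_n _)). unfold Rdist in HK.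
 assert (HK' : mS - sum_f_R0 m K < eps/3). { pose proof (sum_le_lim m mS K Hm0 Hm). apply Rabs_def2 in HK. lra. }
 destruct (cont_pt_elim _ _ (cont_sum f K Hc y0) _ He3) as [d [Hd Hdd]].
 exists (Rmin d 1). split. apply Rmin_pos; lra. intros x Hx.
 assert (Hx1 : Rabs x <= Rabs y0 + 1).
 { pose proof (Rabs_triang (x - y0) y0). replace (x - y0 + y0) with x in H by ring.
   pose proof (Rmin_r d 1). lra. }
 assert (A1 := tan_unif _ _ _ Hm Hmb x K Hx1).
 assert (A2 := tan_unif _ _ _ Hm Hmb y0 K ltac:(lra)).
 assert (A3 := Hdd x ltac:(pose proof (Rmin_l d 1); lra)).
 replace (F x - F y0) with ((F x - sum_f_R0 (fun n => f n x) K) - (F y0 - sum_f_R0 (fun n => f n y0) K)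
    + (sum_f_R0 (fun n => f n x) K - sum_f_R0 (fun n => f n y0) K)) by ring.
 eapply Rle_lt_trans. apply Rabs_triang. eapply Rle_lt_trans. apply Rplus_le_compat_r. apply Rabs_triang.
 rewrite Rabs_Ropp. lra. Qed.

Lemma tan_beta_nonneg n : 0 <= beta n.
Proof. eapply Rle_trans. apply Rabs_pos. apply (Hb n 0 0 0). lra. exists (RiemannInt_P7 (f n) 0).
 apply RiemannInt_P9. Qed.

Lemma tan_I_bound n : Rabs (I n) <= beta n.
Proof. apply Rimp_bound with (f n); auto. intros; eapply Hb; eauto. Qed.

Lemma tannery : continuity F /\ exists S, Un_cv (fun N => sum_f_R0 I N) S /\ Rimp F S.
Proof.
 split. apply tan_cont.
 destruct (abs_conv I beta Bsum tan_I_bound Hbs) as [S HS]. exists S. split; auto.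
 intros eps He. set (e4 := eps/4). assert (He4 : e4 > 0) by (unfold e4; lra).
 destruct (Hbs _ He4) as [N HN]. specialize (HN N (le_n _)). unfold Rdist in HN.
 assert (HBN : Bsum - sum_f_R0 beta N < e4).
 { pose proof (sum_le_lim beta Bsum N tan_beta_nonneg Hbs). apply Rabs_def2 in HN. lra. }
 set (e' := e4 / (INR N + 1)). assert (He' : e' > 0) by (unfold e'; apply Rdiv_lt_0_compat; [lra | pose proof (pos_INR N); lra]).
 destruct (finite_M (fun n M => forall a b v, a <= -M -> M <= b -> is_RInt (f n) a b v -> Rabs (v - I n) < e'))
   with (N := N) as [M0 HM0].
 { intros n M M' HMM HP a b v Ha Hb' Hv. apply (HP a b v); auto; lra. }
 { intros n. apply (Himp n e' He'). }
 exists (Rmax M0 0). intros a b v Ha Hbb Hv.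
 assert (HM00 := Rmax_l M0 0). assert (HM01 := Rmax_r M0 0).
 assert (Hab : a <= b) by lra.
 destruct (Hcomp (Rmax (Rabs a) (Rabs b))) as [m [mS [Hm Hmb]]].
 assert (Hm0 := tan_m_nonneg (Rmax (Rabs a) (Rabs b)) m ltac:(eapply Rle_trans; [apply Rabs_pos|apply Rmax_l]) Hmb).
 set (c := e4 / (b - a + 1)). assert (Hc0 : c > 0) by (unfold c; apply Rdiv_lt_0_compat; lra).
 destruct (Hm _ Hc0) as [K0 HK0]. set (K := (K0 + N)%nat). specialize (HK0 K ltac:(unfold K; lia)). unfold Rdist in HK0.
 assert (HmK : mS - sum_f_R0 m K < c). { pose proof (sum_le_lim m mS K Hm0 Hm). apply Rabs_def2 in HK0. lra. }
 assert (HmK0 : 0 <= mS - sum_f_R0 m K). { pose proof (sum_le_lim m mS K Hm0 Hm). lra. }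
 set (vn := fun n => RintC (f n) (Hc n) a b).
 assert (F1 : Rabs (v - sum_f_R0 vn K) < e4).
 { assert (Hd : is_RInt (fun y => F y - sum_f_R0 (fun n => f n y) K) a b (v - sum_f_R0 vn K)).
   { apply is_RInt_sub; auto. apply is_RInt_sum. intros; apply RintC_is. }
   assert (Hbound : forall x, a < x < b -> Rabs (F x - sum_f_R0 (fun n => f n x) K) <= mS - sum_f_R0 m K).
   { intros x Hx. apply (tan_unif (Rmax (Rabs a) (Rabs b))); auto. apply Rmax_Rle. destruct (Rle_dec 0 x).
     right. rewrite (Rabs_right x), (Rabs_right b); lra. left. rewrite (Rabs_left x), (Rabs_left1 a); lra. }
   assert (Hbd := is_RInt_abs_le (fun y => F y - sum_f_R0 (fun n => f n y) K) (fun _ => mS - sum_f_R0 m K) a b _ _ Hab Hbound Hd (is_RInt_const _ a b)).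
   eapply Rle_lt_trans. apply Hbd.
   apply Rle_lt_trans with ((b - a + 1) * (mS - sum_f_R0 m K)). nra.
   unfold c in HmK. apply (Rmult_lt_compat_l (b - a + 1)) in HmK; [|lra]. field_simplify in HmK; lra. }
 assert (Hvb : forall n, Rabs (vn n) <= beta n). { intros n. apply (Hb n a b); auto. apply RintC_is. }
 assert (F2 : Rabs (sum_f_R0 vn K - sum_f_R0 vn N) < e4).
 { eapply Rle_lt_trans. apply (sum_diff_bound vn beta N K Hvb ltac:(unfold K; lia)).
   pose proof (sum_le_lim beta Bsum K tan_beta_nonneg Hbs). lra. }
 assert (F3 : Rabs (sum_f_R0 vn N - sum_f_R0 I N) <= e4).
 { rewrite <- minus_sum. eapply Rle_trans. apply (sum_const_bound _ e'). intros n Hn. left.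
   apply (HM0 n Hn a b (vn n)); [lra|lra|apply RintC_is]. unfold e'. right; field. pose proof (pos_INR N); lra. }
 assert (F4 : Rabs (sum_f_R0 I N - S) < e4).
 { rewrite Rabs_minus_sym. eapply Rle_lt_trans. apply (sum_tail_bound I beta S Bsum N tan_I_bound HS Hbs). auto. }
 replace (v - S) with ((v - sum_f_R0 vn K) + (sum_f_R0 vn K - sum_f_R0 vn N) + (sum_f_R0 vn N - sum_f_R0 I N) + (sum_f_R0 I N - S)) by ring.
 set (x1 := v - sum_f_R0 vn K) in *. set (x2 := sum_f_R0 vn K - sum_f_R0 vn N) in *.
 set (x3 := sum_f_R0 vn N - sum_f_R0 I N) in *. set (x4 := sum_f_R0 I N - S) in *.
 pose proof (Rabs_triang (x1+x2+x3) x4). pose proof (Rabs_triang (x1+x2) x3). pose proof (Rabs_triang x1 x2).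
 unfold e4 in *. lra. Qed.
End Tannery.

Lemma dl_eq f x l l' : derivable_pt_lim f x l -> l = l' -> derivable_pt_lim f x l'.
Proof. intros H <-; auto. Qed.

Lemma D_mul f g x a b : derivable_pt_lim f x a -> derivable_pt_lim g x b ->
  derivable_pt_lim (fun y => f y * g y) x (a * g x + f x * b).
Proof. intros; apply (derivable_pt_lim_mult f g); auto. Qed.

Lemma D_add f g x a b : derivable_pt_lim f x a -> derivable_pt_lim g x b ->
  derivable_pt_lim (fun y => f y + g y) x (a + b).
Proof. intros; apply (derivable_pt_lim_plus f g); auto. Qed.

Lemma D_const c x : derivable_pt_lim (fun _ => c) x 0.
Proof. apply derivable_pt_lim_const. Qed.

Lemma D_id x : derivable_pt_lim (fun y => y) x 1.
Proof. apply derivable_pt_lim_id. Qed.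

Lemma D_comp f g x a b : derivable_pt_lim f x a -> derivable_pt_lim g (f x) b ->
  derivable_pt_lim (fun y => g (f y)) x (b * a).
Proof. intros; apply (derivable_pt_lim_comp f g); auto. Qed.

Lemma D_expq c x : derivable_pt_lim (fun s => exp (c * s^2)) x (2*c*x*exp(c*x^2)).
Proof. apply dl_eq with (exp (c*x^2) * (0 * x^2 + c * (INR 2 * x ^ pred 2))).
 apply D_comp. apply D_mul. apply D_const. apply derivable_pt_lim_pow. apply derivable_pt_lim_exp.
 simpl; ring. Qed.

Lemma exp_le x y : x <= y -> exp x <= exp y.
Proof. intros [H|<-]. left; apply exp_increasing; auto. right; auto. Qed.

Lemma is_RInt_point f a : is_RInt f a a 0.
Proof. exists (RiemannInt_P7 f a). apply RiemannInt_P9. Qed.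

Definition gs (y : R) := exp (- (y^2/2)).
Lemma gs_cont : continuity gs.
Proof. unfold gs; reg. Qed.
Lemma gs_pos y : 0 < gs y.
Proof. apply exp_pos. Qed.

Definition Phi t := RintC gs gs_cont 0 t.

Definition hh (t u : R) := exp (- (1+u^2)/2 * t^2) / (1+u^2).
Definition hh1 (t u : R) := - t * exp (- (1+u^2)/2 * t^2).
Lemma hh_cont t : continuity (hh t).
Proof. unfold hh. reg. intros x; pose proof (pow2_ge_0 x); lra. Qed.
Lemma hh1_cont t : continuity (hh1 t).
Proof. unfold hh1. reg. Qed.

Definition HH t := RintC (hh t) (hh_cont t) 0 1.
Definition HH1 t := RintC (hh1 t) (hh1_cont t) 0 1.

Lemma dui (h h1 : R -> R -> R) (Hh : forall t, continuity (h t)) (Hh1 : forall t, continuity (h1 t)) t K :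
  0 <= K ->
  (forall u d, 0 <= u <= 1 -> Rabs d <= 1 -> Rabs (h (t+d) u - h t u - d * h1 t u) <= K * d^2) ->
  derivable_pt_lim (fun s => RintC (h s) (Hh s) 0 1) t (RintC (h1 t) (Hh1 t) 0 1).
Proof. intros HK Hb eps He.
 assert (Hd : 0 < Rmin 1 (eps/(K+1))) by (apply Rmin_pos; [lra| apply Rdiv_lt_0_compat; lra]).
 exists (mkposreal _ Hd). intros d Hd0 Hdl. simpl in Hdl.
 assert (Hd1 : Rabs d <= 1) by (pose proof (Rmin_l 1 (eps/(K+1))); lra).
 assert (Hd2 : Rabs d < eps/(K+1)) by (pose proof (Rmin_r 1 (eps/(K+1))); lra).
 set (A := RintC (h (t+d)) (Hh (t+d)) 0 1). set (B := RintC (h t) (Hh t) 0 1). set (C := RintC (h1 t) (Hh1 t) 0 1).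
 assert (E : is_RInt (fun u => h (t+d) u - h t u - d * h1 t u) 0 1 (A - B - d * C)).
 { apply is_RInt_sub. apply is_RInt_sub; apply RintC_is. apply is_RInt_scal, RintC_is. }
 assert (Hbb : forall u, 0 < u < 1 -> Rabs (h (t+d) u - h t u - d * h1 t u) <= K * d^2).
 { intros u Hu; apply Hb; auto; lra. }
 assert (H01 : 0 <= 1) by lra.
 assert (Bd := is_RInt_abs_le _ (fun _ => K * d^2) 0 1 _ _ H01 Hbb E (is_RInt_const _ 0 1)).
 replace ((A - B)/d - C) with ((A - B - d*C)/d) by (field; auto).
 unfold Rdiv. rewrite Rabs_mult, Rabs_inv. 
 assert (Hpd : 0 < Rabs d) by (apply Rabs_pos_lt; auto).
 apply Rle_lt_trans with (K * Rabs d).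
 { apply (Rmult_le_reg_r (Rabs d)); auto. rewrite Rmult_assoc, Rinv_l by lra. rewrite Rmult_1_r.
   replace (K * Rabs d * Rabs d) with (K * (Rabs d)^2) by ring. rewrite pow2_abs. lra. }
 apply Rle_lt_trans with ((K+1) * Rabs d). nra.
 apply (Rmult_lt_compat_l (K+1)) in Hd2; [|lra]. field_simplify in Hd2; lra. Qed.

Lemma D_shift t x : derivable_pt_lim (fun e => t + e) x 1.
Proof. apply dl_eq with (0 + 1). apply D_add. apply D_const. apply D_id. ring. Qed.

Lemma hh_d u x : derivable_pt_lim (fun s => hh s u) x (hh1 x u).
Proof. unfold hh, hh1. assert (Hv : 1 + u^2 > 0) by (pose proof (pow2_ge_0 u); lra).
 apply dl_eq with (2 * (- (1+u^2)/2) * x * exp (- (1+u^2)/2 * x^2) * / (1+u^2) + exp (- (1+u^2)/2 * x^2) * 0).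
 apply (D_mul (fun s => exp (- (1+u^2)/2 * s^2)) (fun _ => / (1+u^2))). apply D_expq. apply D_const.
 field. lra. Qed.

Definition hh2 (x u : R) := ((1+u^2) * x^2 - 1) * exp (- (1+u^2)/2 * x^2).

Lemma hh1_d u x : derivable_pt_lim (fun s => hh1 s u) x (hh2 x u).
Proof. unfold hh1, hh2.
 apply dl_eq with ((-1) * exp (- (1+u^2)/2 * x^2) + (- x) * (2 * (- (1+u^2)/2) * x * exp (- (1+u^2)/2 * x^2))).
 apply (D_mul (fun s => - s) (fun s => exp (- (1+u^2)/2 * s^2))).
 apply dl_eq with (-(1)). apply (derivable_pt_lim_opp id). apply derivable_pt_lim_id. ring.
 apply D_expq. field. Qed.

Lemma xexp_bound x : 0 <= x -> x * exp (- (x/2)) <= 2.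
Proof. intros Hx. rewrite exp_Ropp. pose proof (exp_ineq1_le (x/2)). pose proof (exp_pos (x/2)).
 apply (Rmult_le_reg_r (exp (x/2))); auto. rewrite Rmult_assoc, Rinv_l by lra. lra. Qed.

Lemma hh2_bound x u : Rabs (hh2 x u) <= 3.
Proof. unfold hh2. set (v := 1 + u^2). assert (Hv : v >= 1) by (unfold v; pose proof (pow2_ge_0 u); lra).
 set (y := v * x^2). assert (Hy : 0 <= y) by (unfold y; pose proof (pow2_ge_0 x); nra).
 replace (- v / 2 * x^2) with (- (y/2)) by (unfold y; field).
 assert (E1 : exp (- (y/2)) <= 1). { rewrite <- exp_0. apply exp_le. lra. }
 pose proof (xexp_bound y Hy). pose proof (exp_pos (- (y/2))).
 rewrite Rabs_mult, (Rabs_right (exp _)) by lra.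
 apply Rle_trans with ((y + 1) * exp (-(y/2))).
 apply Rmult_le_compat_r. lra. apply Rabs_le. lra. lra. Qed.

Lemma hh_taylor t u d : Rabs (hh (t+d) u - hh t u - d * hh1 t u) <= 3 * d^2.
Proof.
 assert (S1 : forall s, Rabs (hh1 s u - hh1 t u) <= 3 * Rabs (s - t)).
 { intros s. destruct (MVT_abs (fun s => hh1 s u) (fun s => hh2 s u) t s) as [c [Hc _]].
   intros; apply hh1_d. rewrite Hc. apply Rmult_le_compat_r. apply Rabs_pos. apply hh2_bound. }
 destruct (MVT_abs (fun e => hh (t+e) u - hh t u - e * hh1 t u) (fun e => hh1 (t+e) u - hh1 t u) 0 d) as [c [Hc Hcr]].
 { intros c _. apply dl_eq with (hh1 (t+c) u * 1 - 0 - (1 * hh1 t u + c * 0)).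
   apply (derivable_pt_lim_minus (fun e => hh (t+e) u - hh t u) (fun e => e * hh1 t u)).
   apply (derivable_pt_lim_minus (fun e => hh (t+e) u) (fun e => hh t u)).
   apply (D_comp (fun e => t + e) (fun s => hh s u)). apply D_shift. apply hh_d. apply D_const.
   apply (D_mul (fun e => e) (fun _ => hh1 t u)). apply D_id. apply D_const. ring. }
 replace (t + 0) with t in Hc by ring. rewrite Rmult_0_l, !Rminus_diag, Rminus_0_r in Hc.
 rewrite Rminus_0_r in Hc. rewrite Hc. eapply Rle_trans. apply Rmult_le_compat_r. apply Rabs_pos. apply S1.
 replace (t + c - t) with c by ring.
 assert (Hcd : Rabs c <= Rabs d).
 { destruct (Rle_dec 0 d). rewrite Rmin_left, Rmax_right in Hcr by lra. rewrite !Rabs_right; lra.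
   rewrite Rmin_right, Rmax_left in Hcr by lra. rewrite !Rabs_left1; lra. }
 rewrite <- pow2_abs. pose proof (Rabs_pos c). nra. Qed.

Lemma HH_d t : derivable_pt_lim HH t (HH1 t).
Proof. unfold HH, HH1. apply (dui hh hh1 hh_cont hh1_cont t 3). lra. intros; apply hh_taylor. Qed.

Lemma Phi_d t : derivable_pt_lim Phi t (gs t).
Proof. unfold Phi. apply RintC_deriv. Qed.

Lemma Phi_is a b : is_RInt gs a b (Phi b - Phi a).
Proof. apply FTC. apply gs_cont. apply Phi_d. Qed.

Lemma hh_split t u : exp (- (1+u^2)/2 * t^2) = gs t * gs (t*u+0).
Proof. unfold gs. rewrite <- exp_plus. f_equal. field. Qed.

Lemma HH1_eq t : HH1 t = - gs t * Phi t.
Proof. unfold HH1. apply (is_RInt_unique (hh1 t) 0 1). apply RintC_is.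
 assert (E : is_RInt gs (t*0+0) (t*1+0) (Phi t)).
 { replace (t*0+0) with 0 by ring. replace (t*1+0) with t by ring. unfold Phi. apply RintC_is. }
 apply is_RInt_subst in E; [|apply gs_cont]. apply is_RInt_scal with (l := - gs t) in E.
 apply is_RInt_ext with (2 := E). intros u. unfold hh1. rewrite hh_split. ring. Qed.

Definition DD t := Phi t ^ 2 + 2 * HH t.

Lemma DD_d t : derivable_pt_lim DD t 0.
Proof. unfold DD. apply dl_eq with ((gs t * Phi t + Phi t * gs t) + (0 * HH t + 2 * HH1 t)).
 apply (D_add (fun t => Phi t ^ 2) (fun t => 2 * HH t)).
 apply dl_eq with (gs t * Phi t + Phi t * gs t). 
 replace (fun t => Phi t ^ 2) with (fun t => Phi t * Phi t) by (apply functional_extensionality; intros; ring).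
 apply D_mul; apply Phi_d. auto.
 apply (D_mul (fun _ => 2) HH). apply D_const. apply HH_d.
 rewrite HH1_eq. ring. Qed.

Lemma Phi_0 : Phi 0 = 0.
Proof. unfold Phi. apply (is_RInt_unique gs 0 0). apply RintC_is. apply is_RInt_point. Qed.

Lemma HH_0 : HH 0 = PI / 4.
Proof. unfold HH. apply (is_RInt_unique (hh 0) 0 1). apply RintC_is.
 rewrite <- atan_1. replace (atan 1) with (atan 1 - atan 0) by (rewrite atan_0; ring).
 apply FTC. apply hh_cont. intros x. apply dl_eq with (/ (1 + x^2)). apply derivable_pt_lim_atan.
 unfold hh. replace (- (1 + x^2)/2 * 0^2) with 0 by ring. rewrite exp_0. field.
 pose proof (pow2_ge_0 x); lra. Qed.

Lemma DD_const t : DD t = PI / 2.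
Proof. assert (E := FTC (fun _ => 0) DD 0 t ltac:(reg) DD_d).
 pose proof (is_RInt_unique _ _ _ _ _ E (is_RInt_zero 0 t)).
 assert (DD 0 = PI/2) by (unfold DD; rewrite Phi_0, HH_0; field). lra. Qed.

Lemma HH_bounds t : 0 <= HH t <= gs t.
Proof. unfold HH. split.
 - apply (is_RInt_mono (fun _ => 0) (hh t) 0 1). lra. intros u Hu. unfold hh.
   apply Rlt_le, Rdiv_lt_0_compat. apply exp_pos. pose proof (pow2_ge_0 u); lra.
   apply is_RInt_zero. apply RintC_is.
 - replace (gs t) with (gs t * (1 - 0)) by ring.
   apply (is_RInt_mono (hh t) (fun _ => gs t) 0 1). lra. intros u Hu. unfold hh.
   rewrite hh_split. assert (gs (t*u+0) <= 1). { unfold gs. rewrite <- exp_0. apply exp_le. pose proof (pow2_ge_0 (t*u+0)). lra. }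
   pose proof (gs_pos t). pose proof (gs_pos (t*u+0)). pose proof (pow2_ge_0 u).
   apply (Rmult_le_reg_r (1+u^2)). lra. unfold Rdiv. rewrite Rmult_assoc, Rinv_l by lra. nra.
   apply RintC_is. apply is_RInt_const. Qed.

Lemma Phi_nonneg t : 0 <= t -> 0 <= Phi t.
Proof. intros Ht. replace (Phi t) with (Phi t - Phi 0) by (rewrite Phi_0; ring).
 apply (is_RInt_mono (fun _ => 0) gs 0 t); auto. intros; left; apply gs_pos. apply is_RInt_zero. apply Phi_is. Qed.

Lemma Phi_odd t : Phi (- t) = - Phi t.
Proof. assert (E : is_RInt gs (-1*0+0) (-1*t+0) (Phi (-t) - Phi 0)).
 { replace (-1*0+0) with 0 by ring. replace (-1*t+0) with (-t) by ring. apply Phi_is. }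
 apply is_RInt_subst in E; [|apply gs_cont].
 assert (E2 : is_RInt (fun u => -1 * gs u) 0 t (-1 * (Phi t - Phi 0))) by (apply is_RInt_scal, Phi_is).
 apply (is_RInt_ext _ (fun u => -1 * gs (-1 * u + 0))) in E2.
 pose proof (is_RInt_unique _ _ _ _ _ E E2). rewrite Phi_0 in H. lra.
 intros u. unfold gs. replace ((-1*u+0)^2) with (u^2) by ring. reflexivity. Qed.

Lemma Phi_close t : 0 <= t -> Rabs (Phi t - sqrt (PI/2)) <= 2 * gs t / sqrt (PI/2).
Proof. intros Ht. assert (HP : 0 < PI/2) by (pose proof PI_RGT_0; lra).
 assert (Hs : 0 < sqrt (PI/2)) by (apply sqrt_lt_R0; auto).
 assert (Hss := sqrt_sqrt (PI/2) ltac:(lra)).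
 pose proof (DD_const t). unfold DD in H. pose proof (HH_bounds t). pose proof (Phi_nonneg t Ht).
 assert (E : Phi t - sqrt (PI/2) = (Phi t ^2 - sqrt (PI/2) * sqrt (PI/2)) / (Phi t + sqrt (PI/2))) by (field; lra).
 rewrite Hss in E.
 rewrite E. unfold Rdiv. rewrite Rabs_mult, Rabs_inv, (Rabs_right (Phi t + _)) by lra.
 apply Rle_trans with (Rabs (Phi t ^ 2 - PI/2) * / sqrt (PI/2)).
 apply Rmult_le_compat_l. apply Rabs_pos. apply Rinv_le_contravar; lra.
 apply Rmult_le_compat_r. left; apply Rinv_0_lt_compat; auto. rewrite Rabs_left1; lra. Qed.

Lemma gs_small d : d > 0 -> exists M, M >= 0 /\ forall y, M <= Rabs y -> gs y < d.
Proof. intros Hd. set (M := Rmax 2 (/ d)). assert (HM2 : 2 <= M) by apply Rmax_l.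
 assert (HMd : /d <= M) by apply Rmax_r. exists M. split; [lra|].
 intros y Hy. pose proof (Rabs_pos y).
 unfold gs. apply Rle_lt_trans with (exp (- M)).
 apply exp_le. rewrite <- pow2_abs. assert (M <= Rabs y ^ 2 / 2) by nra. lra.
 rewrite exp_Ropp. pose proof (exp_ineq1_le M). apply (Rmult_lt_reg_r (exp M)). apply exp_pos.
 rewrite Rinv_l by (pose proof (exp_pos M); lra).
 apply Rlt_le_trans with (d * (1 + M)). 2: apply Rmult_le_compat_l; lra.
 apply (Rmult_le_compat_l d) in HMd; [|lra]. rewrite Rinv_r in HMd by lra. nra. Qed.

Lemma gauss_imp : Rimp gs (sqrt (2 * PI)).
Proof. intros eps He. assert (HP : 0 < PI/2) by (pose proof PI_RGT_0; lra).
 assert (Hs : 0 < sqrt (PI/2)) by (apply sqrt_lt_R0; auto).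
 destruct (gs_small (eps * sqrt (PI/2) / 4)) as [M [HM0 HM]]. apply Rdiv_lt_0_compat; [nra|lra].
 exists M. intros a b v Ha Hb Hv.
 rewrite (is_RInt_unique _ _ _ _ _ Hv (Phi_is a b)).
 replace (sqrt (2*PI)) with (2 * sqrt (PI/2)).
 2:{ replace (2*PI) with (4 * (PI/2)) by field. rewrite sqrt_mult by lra. replace 4 with (2*2) by ring.
     rewrite sqrt_square by lra. auto. }
 replace (Phi a) with (- Phi (- a)) by (rewrite <- Phi_odd, Ropp_involutive; auto).
 replace (Phi b - - Phi (- a) - 2 * sqrt (PI/2)) with ((Phi b - sqrt (PI/2)) + (Phi (-a) - sqrt (PI/2))) by ring.
 eapply Rle_lt_trans. apply Rabs_triang.
 pose proof (Phi_close b ltac:(lra)). pose proof (Phi_close (-a) ltac:(lra)).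
 pose proof (HM b ltac:(rewrite Rabs_right; lra)). pose proof (HM (-a) ltac:(rewrite Rabs_right; lra)).
 assert (2 * gs b / sqrt (PI/2) < eps/2). { apply (Rmult_lt_reg_r (sqrt (PI/2))); auto. field_simplify; lra. }
 assert (2 * gs (-a) / sqrt (PI/2) < eps/2). { apply (Rmult_lt_reg_r (sqrt (PI/2))); auto. field_simplify; lra. }
 lra. Qed.

Lemma Rimp_ext f g I : (forall y, f y = g y) -> Rimp f I -> Rimp g I.
Proof. intros H; replace g with f by (apply functional_extensionality; auto); auto. Qed.

Lemma Rimp_lin f g I J l : continuity f -> continuity g -> Rimp f I -> Rimp g J ->
  Rimp (fun y => f y + l * g y) (I + l * J).
Proof. intros Hf Hg HI HJ eps He.
 assert (He2 : eps / 2 / (Rabs l + 1) > 0). { apply Rdiv_lt_0_compat. lra. pose proof (Rabs_pos l); lra. }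
 destruct (HI (eps/2) ltac:(lra)) as [M1 H1]. destruct (HJ _ He2) as [M2 H2].
 exists (Rmax M1 M2). intros a b v Ha Hb Hv.
 pose proof (Rmax_l M1 M2). pose proof (Rmax_r M1 M2).
 destruct (cont_is_RInt f a b Hf) as [u Hu]. destruct (cont_is_RInt g a b Hg) as [w Hw].
 rewrite (is_RInt_unique _ _ _ _ _ Hv (is_RInt_lin _ _ _ _ l _ _ Hu Hw)).
 specialize (H1 a b u ltac:(lra) ltac:(lra) Hu). specialize (H2 a b w ltac:(lra) ltac:(lra) Hw).
 replace (u + l * w - (I + l * J)) with ((u - I) + l * (w - J)) by ring.
 eapply Rle_lt_trans. apply Rabs_triang. rewrite Rabs_mult.
 assert (Rabs l * Rabs (w - J) <= eps/2).
 { apply Rle_trans with (Rabs l * (eps / 2 / (Rabs l + 1))). apply Rmult_le_compat_l. apply Rabs_pos. lra.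
   apply (Rmult_le_reg_r (Rabs l + 1)). pose proof (Rabs_pos l); lra. field_simplify. 2: pose proof (Rabs_pos l); lra.
   pose proof (Rabs_pos l). nra. }
 lra. Qed.

Lemma Rimp_scal f I l : continuity f -> Rimp f I -> Rimp (fun y => l * f y) (l * I).
Proof. intros Hf HI. assert (H := Rimp_lin (fun _ => 0) f 0 I l ltac:(reg) Hf).
 assert (Rimp (fun _ => 0) 0). { intros eps He. exists 0. intros a b v _ _ Hv.
   rewrite (is_RInt_unique _ _ _ _ _ Hv (is_RInt_zero a b)). rewrite Rminus_diag, Rabs_R0; lra. }
 specialize (H H0 HI). replace (l * I) with (0 + l * I) by ring. apply Rimp_ext with (2 := H). intros; ring. Qed.

Lemma Rimp_add f g I J : continuity f -> continuity g -> Rimp f I -> Rimp g J -> Rimp (fun y => f y + g y) (I + J).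
Proof. intros. replace (I + J) with (I + 1 * J) by ring. apply Rimp_ext with (2 := Rimp_lin f g I J 1 H H0 H1 H2). intros; ring. Qed.

Lemma exp_ge_pow x j : 0 <= x -> x ^ j / INR (fact j) <= exp x.
Proof. intros Hx. unfold exp. destruct (exist_exp x) as [l Hl]. simpl.
 assert (Hn : forall i, 0 <= / INR (fact i) * x ^ i).
 { intros i. apply Rmult_le_pos. left; apply Rinv_0_lt_compat, INR_fact_lt_0. apply pow_le; auto. }
 apply Rle_trans with (sum_f_R0 (fun i => / INR (fact i) * x ^ i) j).
 destruct j. simpl. lra. simpl. pose proof (cond_pos_sum _ j Hn). unfold Rdiv. lra.
 apply sum_le_lim; auto. Qed.

Lemma poly_gs_small k eps : eps > 0 -> exists M, M >= 0 /\ forall y, M <= Rabs y -> Rabs (y ^ k * gs y) < eps.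
Proof. intros He. set (C := INR (fact (S k)) * 2 ^ (S k)).
 assert (HC : 0 < C) by (unfold C; apply Rmult_lt_0_compat; [apply INR_fact_lt_0 | apply pow_lt; lra]).
 set (M := Rmax 1 (C / eps + 1)). assert (HM1 : 1 <= M) by apply Rmax_l. assert (HM2 : C/eps + 1 <= M) by apply Rmax_r.
 exists M. split; [lra|]. intros y Hy. set (r := Rabs y).
 assert (Hr : 1 <= r) by (unfold r; lra).
 rewrite Rabs_mult, <- RPow_abs, (Rabs_right (gs y)) by (left; apply gs_pos). fold r.
 unfold gs. rewrite exp_Ropp.
 assert (E := exp_ge_pow (y^2/2) (S k) ltac:(pose proof (pow2_ge_0 y); lra)).
 replace (y^2) with (r^2) in E by (unfold r; apply pow2_abs).
 assert (Hx : (r^2/2)^(S k) = r^(2 * S k) / 2^(S k)) by (rewrite pow_mult; unfold Rdiv; rewrite Rpow_mult_distr, pow_inv; reflexivity).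
 rewrite Hx in E.
 assert (Hpos : 0 < r ^ (2 * S k) / 2 ^ S k / INR (fact (S k))).
 { apply Rdiv_lt_0_compat. apply Rdiv_lt_0_compat. apply pow_lt; lra. apply pow_lt; lra. apply INR_fact_lt_0. }
 apply Rle_lt_trans with (r ^ k * / (r ^ (2 * S k) / 2 ^ S k / INR (fact (S k)))).
 apply Rmult_le_compat_l. apply pow_le; lra. apply Rinv_le_contravar; auto.
 replace (y^2) with (r^2) by (unfold r; apply pow2_abs). exact E.
 replace (r ^ k * / (r ^ (2 * S k) / 2 ^ S k / INR (fact (S k)))) with (C / r ^ (S (S k))).
 2:{ unfold C. replace (2 * S k)%nat with (k + S (S k))%nat by lia. rewrite pow_add. field.
     repeat split; first [apply pow_nonzero; lra | apply INR_fact_neq_0 | lra]. }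
 assert (r <= r ^ S (S k)). { replace r with (r ^ 1) at 1 by ring. apply Rle_pow; auto. lia. }
 apply Rle_lt_trans with (C / r). apply Rmult_le_compat_l; [lra|]. apply Rinv_le_contravar; lra.
 apply (Rmult_lt_reg_r r). lra. unfold Rdiv. rewrite Rmult_assoc, Rinv_l by lra.
 apply Rlt_le_trans with (eps * (C/eps + 1)). replace (eps * (C/eps + 1)) with (C + eps) by (field; try lra). lra.
 apply Rmult_le_compat_l; unfold r in *; lra. Qed.

Fixpoint Mo (m : nat) : R :=
  match m with O => sqrt (2 * PI) | S O => 0 | S (S k as k1) => INR k1 * Mo k end.

Lemma mom_cont m : continuity (fun y => y ^ m * gs y).
Proof. unfold gs; reg. Qed.

Lemma mom1_imp : Rimp (fun y => y ^ 1 * gs y) 0.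
Proof. intros eps He. destruct (gs_small (eps/2) ltac:(lra)) as [M [HM0 HM]].
 exists M. intros a b v Ha Hb Hv.
 assert (E : is_RInt (fun y => y ^ 1 * gs y) a b ((- gs b) - (- gs a))).
 { apply (FTC _ (fun y => - gs y)). apply mom_cont. intros x. unfold gs.
   apply dl_eq with (- (2 * (-(1/2)) * x * exp (-(1/2) * x^2))).
   replace (fun y => - exp (- (y^2/2))) with (fun y => - exp (-(1/2) * y^2)) by (apply functional_extensionality; intros; do 3 f_equal; field).
   apply (derivable_pt_lim_opp (fun y => exp (-(1/2) * y^2))). apply D_expq.
   replace (-(1/2) * x^2) with (- (x^2/2)) by field. field. }
 rewrite (is_RInt_unique _ _ _ _ _ Hv E).
 pose proof (HM a ltac:(rewrite Rabs_left1; lra)). pose proof (HM b ltac:(rewrite Rabs_right; lra)).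
 pose proof (gs_pos a). pose proof (gs_pos b).
 rewrite Rminus_0_r. apply Rabs_def1; lra. Qed.

Lemma mom_step m I : Rimp (fun y => y ^ m * gs y) I -> Rimp (fun y => y ^ (S (S m)) * gs y) (INR (S m) * I).
Proof. intros HI eps He.
 assert (He2 : eps / 3 / (INR (S m)) > 0) by (apply Rdiv_lt_0_compat; [lra| apply lt_0_INR; lia]).
 destruct (HI _ He2) as [M1 H1]. destruct (poly_gs_small (S m) (eps/3) ltac:(lra)) as [M2 [HM2 H2]].
 exists (Rmax M1 M2). intros a b v Ha Hb Hv. pose proof (Rmax_l M1 M2). pose proof (Rmax_r M1 M2).
 set (F := fun y => - (y ^ (S m) * gs y)).
 assert (E : is_RInt (fun y => y ^ (S (S m)) * gs y - INR (S m) * (y ^ m * gs y)) a b (F b - F a)).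
 { apply (FTC _ F). unfold gs; reg. intros x. unfold F, gs.
   apply dl_eq with (- (INR (S m) * x ^ pred (S m) * exp (-(1/2) * x^2) + x ^ (S m) * (2 * (-(1/2)) * x * exp (-(1/2) * x^2)))).
   replace (fun y => - (y ^ S m * exp (- (y^2/2)))) with (fun y => - (y ^ S m * exp (-(1/2) * y^2))) by (apply functional_extensionality; intros; do 4 f_equal; field).
   apply (derivable_pt_lim_opp (fun y => y ^ S m * exp (-(1/2) * y^2))).
   apply (D_mul (fun y => y ^ S m) (fun y => exp (-(1/2) * y^2))). apply derivable_pt_lim_pow. apply D_expq.
   replace (-(1/2) * x^2) with (- (x^2/2)) by field. simpl pred. simpl. field. }
 destruct (cont_is_RInt _ a b (mom_cont m)) as [w Hw].
 assert (E2 := is_RInt_add _ _ _ _ _ _ E (is_RInt_scal _ _ _ (INR (S m)) _ Hw)).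
 apply (is_RInt_ext _ (fun y => y ^ (S (S m)) * gs y)) in E2; [| intros; ring].
 rewrite (is_RInt_unique _ _ _ _ _ Hv E2).
 specialize (H1 a b w ltac:(lra) ltac:(lra) Hw).
 assert (Ha2 : Rabs (F a) < eps/3) by (unfold F; rewrite Rabs_Ropp; apply H2; rewrite Rabs_left1; lra).
 assert (Hb2 : Rabs (F b) < eps/3) by (unfold F; rewrite Rabs_Ropp; apply H2; rewrite Rabs_right; lra).
 assert (Hm : 0 < INR (S m)) by (apply lt_0_INR; lia).
 assert (Rabs (INR (S m) * (w - I)) <= eps / 3).
 { rewrite Rabs_mult, Rabs_right by lra. apply (Rmult_lt_compat_l (INR (S m))) in H1; auto.
   field_simplify in H1; lra. }
 replace (F b - F a + INR (S m) * w - INR (S m) * I) with (F b - F a + INR (S m) * (w - I)) by ring.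
 pose proof (Rabs_triang (F b - F a) (INR (S m) * (w - I))). pose proof (Rabs_triang (F b) (- F a)).
 rewrite Rabs_Ropp in H5. replace (F b + - F a) with (F b - F a) in H5 by ring. lra. Qed.

Lemma mom_imp m : Rimp (fun y => y ^ m * gs y) (Mo m).
Proof. assert (forall m, Rimp (fun y => y ^ m * gs y) (Mo m) /\ Rimp (fun y => y ^ (S m) * gs y) (Mo (S m))).
 { induction m0. split. simpl. apply Rimp_ext with (2 := gauss_imp). intros; ring. apply mom1_imp.
   destruct IHm0 as [A B]. split; auto. apply mom_step in A. simpl Mo. destruct m0; auto. }
 apply H. Qed.

Lemma Mo_SS k : Mo (S (S k)) = INR (S k) * Mo k.
Proof. reflexivity. Qed.

Lemma Mo_odd j : Mo (2 * j + 1) = 0.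
Proof. induction j. reflexivity. replace (2 * S j + 1)%nat with (S (S (2 * j + 1))) by lia.
 rewrite Mo_SS, IHj. ring. Qed.

Lemma Mo_even j : Mo (2 * j) = INR (fact (2 * j)) / (2 ^ j * INR (fact j)) * sqrt (2 * PI).
Proof. induction j. simpl. field.
 replace (2 * S j)%nat with (S (S (2 * j))) by lia. rewrite Mo_SS, IHj.
 replace (fact (S (S (2 * j)))) with (S (S (2 * j)) * (S (2 * j) * fact (2 * j)))%nat by reflexivity.
 replace (fact (S j)) with (S j * fact j)%nat by reflexivity.
 rewrite !mult_INR. rewrite !S_INR, mult_INR. simpl pow. replace (INR 2) with 2 by reflexivity.
 field. repeat split; first [apply pow_nonzero; lra | apply INR_fact_neq_0 | pose proof (pos_INR j); lra]. Qed.

Lemma cv_sum_scal_r (a : nat -> R) l c : Un_cv (fun N => sum_f_R0 a N) l -> Un_cv (fun N => sum_f_R0 (fun n => a n * c) N) (l * c).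
Proof. intros H. replace (fun N => sum_f_R0 (fun n => a n * c) N) with (fun N => sum_f_R0 a N * c).
 apply (CV_mult (fun N => sum_f_R0 a N) (fun _ => c)); auto. apply cv_const.
 apply functional_extensionality; intros N. rewrite Rmult_comm, scal_sum. reflexivity. Qed.

Lemma cv_sum_scal_l (a : nat -> R) l c : Un_cv (fun N => sum_f_R0 a N) l -> Un_cv (fun N => sum_f_R0 (fun n => c * a n) N) (c * l).
Proof. intros H. rewrite Rmult_comm. replace (fun n => c * a n) with (fun n => a n * c) by (apply functional_extensionality; intros; ring).
 apply cv_sum_scal_r; auto. Qed.

Lemma exp_series x : Un_cv (fun N => sum_f_R0 (fun i => / INR (fact i) * x ^ i) N) (exp x).
Proof. unfold exp. destruct (exist_exp x) as [l Hl]. simpl. exact Hl. Qed.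

Lemma UL u l l' : Un_cv u l -> Un_cv u l' -> l = l'.
Proof. apply UL_sequence. Qed.

Lemma fact_le_INR n m : (n <= m)%nat -> INR (fact n) <= INR (fact m).
Proof. intros; apply le_INR, fact_le; auto. Qed.

Lemma pow2j_nonneg y j : 0 <= y ^ (2 * j).
Proof. rewrite pow_mult. apply pow_le. apply pow2_ge_0. Qed.

Lemma pow_abs_le x y n : Rabs x <= Rabs y -> Rabs (x ^ n) <= Rabs (y ^ n).
Proof. intros H. rewrite <- !RPow_abs. apply pow_incr. split; auto. apply Rabs_pos. Qed.

Section FC.
Variable be : R.

Definition fc j y := (-1) ^ j / INR (fact (2 * j)) * (be * y) ^ (2 * j) * gs y.
Definition cc j := (-1) ^ j / INR (fact (2 * j)) * be ^ (2 * j).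

Lemma fc_eq j y : fc j y = cc j * (y ^ (2 * j) * gs y).
Proof. unfold fc, cc. rewrite Rpow_mult_distr. ring. Qed.

Lemma fc_cont j : continuity (fc j).
Proof. unfold fc, gs. reg. Qed.

Lemma fc_I j : cc j * Mo (2 * j) = sqrt (2 * PI) * (/ INR (fact j) * (- (be ^ 2 / 2)) ^ j).
Proof. unfold cc. rewrite Mo_even, pow_mult.
 replace (- (be ^ 2 / 2)) with ((-1) * (be ^ 2) * / 2) by field. rewrite !Rpow_mult_distr, pow_inv.
 field. repeat split; first [apply pow_nonzero; lra | apply INR_fact_neq_0]. Qed.

Lemma fc_imp : Rimp (fun y => gs y * cos (be * y)) (sqrt (2 * PI) * exp (- (be ^ 2 / 2))).
Proof.
 set (I := fun j => cc j * Mo (2 * j)).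
 set (beta := fun j => sqrt (2 * PI) * (/ INR (fact j) * (be ^ 2 / 2) ^ j)).
 assert (Hsq : 0 <= sqrt (2 * PI)) by apply sqrt_pos.
 destruct (tannery fc (fun y => gs y * cos (be * y)) I beta (sqrt (2 * PI) * exp (be ^ 2 / 2))) as [_ [S [HS HSimp]]].
 - apply fc_cont.
 - intros y. rewrite Rmult_comm. unfold fc.
   apply (cv_sum_scal_r (fun j => (-1) ^ j / INR (fact (2 * j)) * (be * y) ^ (2 * j))). apply A1_cvg.
 - intros Rr. exists (fun j => / INR (fact j) * ((be * Rr) ^ 2) ^ j), (exp ((be * Rr) ^ 2)). split. apply exp_series.
   intros n y Hy. unfold fc. rewrite !Rabs_mult.
   assert (Hg : Rabs (gs y) <= 1). { rewrite Rabs_right by (left; apply gs_pos). unfold gs. rewrite <- exp_0. apply exp_le. pose proof (pow2_ge_0 y); lra. }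
   assert (H1 : Rabs ((-1) ^ n / INR (fact (2 * n))) <= / INR (fact n)).
   { unfold Rdiv. rewrite Rabs_mult, <- RPow_abs. replace (Rabs (-1)) with 1 by (rewrite Rabs_left; lra).
     rewrite pow1, Rabs_inv, Rabs_right by (left; apply INR_fact_lt_0).
     rewrite Rmult_1_l. apply Rinv_le_contravar. apply INR_fact_lt_0. apply fact_le_INR. lia. }
   assert (H2 : Rabs ((be * y) ^ (2 * n)) <= ((be * Rr) ^ 2) ^ n).
   { rewrite <- pow_mult. rewrite <- (Rabs_right ((be * Rr) ^ (2 * n))) by (apply Rle_ge, pow2j_nonneg).
     apply pow_abs_le. rewrite !Rabs_mult. apply Rmult_le_compat_l. apply Rabs_pos. eapply Rle_trans. apply Hy. apply Rle_abs. }
   pose proof (Rabs_pos ((-1) ^ n / INR (fact (2 * n)))). pose proof (Rabs_pos ((be * y) ^ (2 * n))). pose proof (Rabs_pos (gs y)).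
   apply Rle_trans with (/ INR (fact n) * ((be * Rr) ^ 2) ^ n * 1).
   apply Rmult_le_compat. apply Rmult_le_pos; auto. auto. apply Rmult_le_compat; auto. auto. rewrite Rmult_1_r; lra.
 - intros j. unfold I. apply Rimp_ext with (fun y => cc j * (y ^ (2 * j) * gs y)).
   intros; symmetry; apply fc_eq. apply Rimp_scal. apply mom_cont. apply mom_imp.
 - intros j a b v Hab Hv. unfold beta. rewrite <- (Rmult_1_l (sqrt _)).
   destruct (cont_is_RInt _ a b (mom_cont (2 * j))) as [w Hw].
   assert (Hv2 := is_RInt_scal _ _ _ (cc j) _ Hw).
   apply (is_RInt_ext _ (fc j)) in Hv2; [| intros; symmetry; apply fc_eq].
   rewrite (is_RInt_unique _ _ _ _ _ Hv Hv2).
   assert (Hw0 : 0 <= w). { apply (is_RInt_mono (fun _ => 0) (fun y => y ^ (2 * j) * gs y) a b 0 w Hab); auto. intros. pose proof (pow2j_nonneg x j). pose proof (gs_pos x). nra. apply is_RInt_zero. }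
   assert (Hw1 : w <= Mo (2 * j)). { apply Rimp_le with (fun y => y ^ (2 * j) * gs y) a b; auto. apply mom_cont. intros x. pose proof (pow2j_nonneg x j). pose proof (gs_pos x). nra. apply mom_imp. }
   rewrite Rabs_mult, (Rabs_right w) by lra.
   apply Rle_trans with (Rabs (cc j) * Mo (2 * j)). apply Rmult_le_compat_l; auto. apply Rabs_pos.
   replace (Rabs (cc j) * Mo (2 * j)) with (Rabs (cc j * Mo (2 * j))) by (rewrite Rabs_mult, (Rabs_right (Mo _)); lra).
   rewrite fc_I. rewrite Rabs_mult, Rabs_right by (apply Rle_ge; auto). rewrite Rabs_mult, Rabs_right by (left; apply Rinv_0_lt_compat, INR_fact_lt_0).
   rewrite <- RPow_abs, Rabs_Ropp, Rabs_right. lra. apply Rle_ge. pose proof (pow2_ge_0 be); lra.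
 - unfold beta. apply cv_sum_scal_l. apply exp_series.
 - replace (sqrt (2 * PI) * exp (- (be ^ 2 / 2))) with S; auto.
   apply (UL (fun N => sum_f_R0 I N)); auto. unfold I.
   replace (fun N => sum_f_R0 (fun j => cc j * Mo (2 * j)) N) with (fun N => sum_f_R0 (fun j => sqrt (2 * PI) * (/ INR (fact j) * (- (be ^ 2 / 2)) ^ j)) N).
   apply cv_sum_scal_l. apply exp_series.
   apply functional_extensionality; intros N. apply sum_eq. intros; symmetry; apply fc_I. Qed.
End FC.

Lemma Rabs_m1_pow n : Rabs ((-1) ^ n) = 1.
Proof. rewrite <- RPow_abs. replace (Rabs (-1)) with 1 by (rewrite Rabs_left; lra). apply pow1. Qed.

Lemma cv_zero_sum : Un_cv (fun N => sum_f_R0 (fun _ => 0) N) 0.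
Proof. replace (fun N => sum_f_R0 (fun _ => 0) N) with (fun _ : nat => 0). apply cv_const.
 apply functional_extensionality; intros N. induction N; simpl; auto. rewrite <- IHN; ring. Qed.

Section FS.
Variable be : R.

Definition fsn j y := (-1) ^ j / INR (fact (2 * j + 1)) * (be * y) ^ (2 * j + 1) * gs y.
Definition cs j := (-1) ^ j / INR (fact (2 * j + 1)) * be ^ (2 * j + 1).

Lemma fsn_eq j y : fsn j y = cs j * (y ^ (2 * j + 1) * gs y).
Proof. unfold fsn, cs. rewrite Rpow_mult_distr. ring. Qed.

Lemma fsn_cont j : continuity (fsn j).
Proof. unfold fsn, gs. reg. Qed.

Lemma odd_pow_bound y j : Rabs (y ^ (2 * j + 1)) <= y ^ (2 * j) + y ^ (2 * j + 2).
Proof. rewrite !pow_add, pow_1. rewrite Rabs_mult, (Rabs_right (y ^ (2 * j))) by (apply Rle_ge, pow2j_nonneg).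
 pose proof (pow2j_nonneg y j).
 assert (Rabs y <= 1 + y ^ 2). { destruct (Rcase_abs y); [rewrite Rabs_left by lra | rewrite Rabs_right by lra]; nra. }
 nra. Qed.

Lemma fsn_beta_eq j : Rabs (cs j) * (Mo (2 * j) + Mo (2 * j + 2)) =
  Rabs be * (/ INR (fact j) * (be ^ 2 / 2) ^ j) * sqrt (2 * PI) * ((2 * INR j + 2) / (2 * INR j + 1)).
Proof. unfold cs. replace (2 * j + 2)%nat with (S (S (2 * j))) by lia. rewrite Mo_SS, Mo_even.
 replace (fact (2 * j + 1)) with (S (2 * j) * fact (2 * j))%nat by (replace (2 * j + 1)%nat with (S (2 * j)) by lia; reflexivity).
 unfold Rdiv. rewrite !Rabs_mult, Rabs_m1_pow, Rabs_inv, (Rabs_right (INR _)) by (left; rewrite mult_INR; apply Rmult_lt_0_compat; [apply lt_0_INR; lia | apply INR_fact_lt_0]).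
 rewrite <- RPow_abs, pow_add, pow_1, pow_mult, pow2_abs.
 rewrite mult_INR, Rpow_mult_distr, pow_inv, S_INR, mult_INR. replace (INR 2) with 2 by reflexivity.
 field. repeat split; first [apply pow_nonzero; lra | apply INR_fact_neq_0 | pose proof (pos_INR j); lra]. Qed.

Lemma fs_imp : Rimp (fun y => gs y * sin (be * y)) 0.
Proof.
 set (I := fun j => cs j * Mo (2 * j + 1)).
 set (beta := fun j => Rabs (cs j) * (Mo (2 * j) + Mo (2 * j + 2))).
 assert (Hsq : 0 <= sqrt (2 * PI)) by apply sqrt_pos.
 assert (HMo : forall j, 0 <= Mo (2 * j)).
 { intros j. rewrite Mo_even. apply Rmult_le_pos; auto. apply Rlt_le, Rdiv_lt_0_compat. apply INR_fact_lt_0.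
   apply Rmult_lt_0_compat. apply pow_lt; lra. apply INR_fact_lt_0. }
 assert (Hbeta : { l | Un_cv (fun N => sum_f_R0 beta N) l }).
 { apply Rseries_CV_comp with (fun j => (2 * Rabs be * sqrt (2 * PI)) * (/ INR (fact j) * (be ^ 2 / 2) ^ j)).
   intros n. unfold beta. rewrite fsn_beta_eq. pose proof (pos_INR n).
   assert (Hq1 : 0 <= / INR (fact n) * (be ^ 2 / 2) ^ n). { apply Rmult_le_pos. left; apply Rinv_0_lt_compat, INR_fact_lt_0. apply pow_le. pose proof (pow2_ge_0 be); lra. }
   assert (Hq2 : 0 <= (2 * INR n + 2) / (2 * INR n + 1) <= 2). { split. apply Rlt_le, Rdiv_lt_0_compat; lra.
     apply (Rmult_le_reg_r (2 * INR n + 1)). lra. unfold Rdiv. rewrite Rmult_assoc, Rinv_l by lra. lra. }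
   pose proof (Rabs_pos be) as Hq3. destruct Hq2 as [Hq2 Hq4]. split.
   apply Rmult_le_pos; [apply Rmult_le_pos; [apply Rmult_le_pos|]|]; auto.
   replace (2 * Rabs be * sqrt (2 * PI) * (/ INR (fact n) * (be ^ 2 / 2) ^ n)) with
     (Rabs be * (/ INR (fact n) * (be ^ 2 / 2) ^ n) * sqrt (2 * PI) * 2) by ring.
   apply Rmult_le_compat_l; auto. apply Rmult_le_pos; [apply Rmult_le_pos|]; auto.
   exists (2 * Rabs be * sqrt (2 * PI) * exp (be ^ 2 / 2)). apply cv_sum_scal_l, exp_series. }
 destruct Hbeta as [Bs HBs].
 destruct (tannery fsn (fun y => gs y * sin (be * y)) I beta Bs) as [_ [S [HS HSimp]]].
 - apply fsn_cont.
 - intros y. rewrite Rmult_comm. unfold fsn.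
   apply (cv_sum_scal_r (fun j => (-1) ^ j / INR (fact (2 * j + 1)) * (be * y) ^ (2 * j + 1))). apply B1_cvg.
 - intros Rr. exists (fun j => Rabs (be * Rr) * (/ INR (fact j) * ((be * Rr) ^ 2) ^ j)), (Rabs (be * Rr) * exp ((be * Rr) ^ 2)).
   split. apply cv_sum_scal_l, exp_series.
   intros n y Hy. unfold fsn. rewrite !Rabs_mult.
   assert (Hg : Rabs (gs y) <= 1). { rewrite Rabs_right by (left; apply gs_pos). unfold gs. rewrite <- exp_0. apply exp_le. pose proof (pow2_ge_0 y); lra. }
   assert (H1 : Rabs ((-1) ^ n / INR (fact (2 * n + 1))) <= / INR (fact n)).
   { unfold Rdiv. rewrite Rabs_mult, Rabs_m1_pow, Rabs_inv, Rabs_right by (left; apply INR_fact_lt_0).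
     rewrite Rmult_1_l. apply Rinv_le_contravar. apply INR_fact_lt_0. apply fact_le_INR. lia. }
   assert (Hby : Rabs (be * y) <= Rabs (be * Rr)).
   { rewrite !Rabs_mult. apply Rmult_le_compat_l. apply Rabs_pos. eapply Rle_trans. apply Hy. apply Rle_abs. }
   assert (H2 : Rabs ((be * y) ^ (2 * n + 1)) <= Rabs (be * Rr) * ((be * Rr) ^ 2) ^ n).
   { eapply Rle_trans. apply (pow_abs_le _ _ (2 * n + 1) Hby). rewrite <- RPow_abs.
     rewrite pow_add, pow_1, pow_mult, pow2_abs. right; ring. }
   pose proof (Rabs_pos ((-1) ^ n / INR (fact (2 * n + 1)))). pose proof (Rabs_pos ((be * y) ^ (2 * n + 1))). pose proof (Rabs_pos (gs y)).
   apply Rle_trans with (/ INR (fact n) * (Rabs (be * Rr) * ((be * Rr) ^ 2) ^ n) * 1).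
   apply Rmult_le_compat. apply Rmult_le_pos; auto. auto. apply Rmult_le_compat; auto. auto. rewrite Rmult_1_r, Rabs_mult. right; ring.
 - intros j. unfold I. apply Rimp_ext with (fun y => cs j * (y ^ (2 * j + 1) * gs y)).
   intros; symmetry; apply fsn_eq. apply Rimp_scal. apply mom_cont. apply mom_imp.
 - intros j a b v Hab Hv. unfold beta.
   destruct (cont_is_RInt _ a b (mom_cont (2 * j + 1))) as [w Hw].
   assert (Hv2 := is_RInt_scal _ _ _ (cs j) _ Hw).
   apply (is_RInt_ext _ (fsn j)) in Hv2; [| intros; symmetry; apply fsn_eq].
   rewrite (is_RInt_unique _ _ _ _ _ Hv Hv2).
   set (g2 := fun y => y ^ (2 * j) * gs y + y ^ (2 * j + 2) * gs y).
   assert (Hg2c : continuity g2) by (unfold g2, gs; reg).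
   destruct (cont_is_RInt _ a b Hg2c) as [w2 Hw2].
   assert (Hw1 : Rabs w <= w2). { apply (is_RInt_abs_le (fun y => y ^ (2 * j + 1) * gs y) g2 a b w w2 Hab); auto. intros x _. unfold g2.
     rewrite Rabs_mult, (Rabs_right (gs x)) by (left; apply gs_pos). pose proof (odd_pow_bound x j). pose proof (gs_pos x). nra. }
   assert (Hw3 : w2 <= Mo (2 * j) + Mo (2 * j + 2)).
   { apply Rimp_le with g2 a b; auto. intros x. unfold g2. pose proof (pow2j_nonneg x j). pose proof (pow2j_nonneg x (S j)).
     replace (2 * S j)%nat with (2 * j + 2)%nat in H0 by lia. pose proof (gs_pos x). nra.
     apply Rimp_add. apply mom_cont. apply mom_cont. apply mom_imp. apply mom_imp. }
   rewrite Rabs_mult. apply Rmult_le_compat_l. apply Rabs_pos. lra.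
 - exact HBs.
 - replace 0 with S; auto. apply (UL (fun N => sum_f_R0 I N)); auto. unfold I.
   replace (fun N => sum_f_R0 (fun j => cs j * Mo (2 * j + 1)) N) with (fun N => sum_f_R0 (fun _ => 0) N).
   apply cv_zero_sum. apply functional_extensionality; intros N. apply sum_eq. intros; rewrite Mo_odd; ring. Qed.
End FS.

Lemma Rimp_shift f I c : continuity f -> Rimp f I -> Rimp (fun y => f (y + c)) I.
Proof. intros Hf HI eps He. destruct (HI eps He) as [M HM].
 exists (M + Rabs c). intros a b v Ha Hb Hv.
 destruct (cont_is_RInt f (1 * a + c) (1 * b + c) Hf) as [w Hw].
 assert (Hw2 := is_RInt_subst f a b 1 c w Hf Hw).
 apply (is_RInt_ext _ (fun y => f (y + c))) in Hw2; [| intros; rewrite Rmult_1_l; f_equal; ring].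
 rewrite (is_RInt_unique _ _ _ _ _ Hv Hw2).
 pose proof (Rle_abs c). pose proof (Rle_abs (-c)). rewrite Rabs_Ropp in H0.
 apply (HM (1 * a + c) (1 * b + c) w); auto; lra. Qed.

Definition gc (al be y : R) := exp (- (y ^ 2 / 2) + al * y) * cos (be * y).
Definition gsi (al be y : R) := exp (- (y ^ 2 / 2) + al * y) * sin (be * y).

Lemma gc_cont al be : continuity (gc al be).
Proof. unfold gc. reg. Qed.
Lemma gsi_cont al be : continuity (gsi al be).
Proof. unfold gsi. reg. Qed.

Lemma gfc_cont be : continuity (fun y => gs y * cos (be * y)).
Proof. unfold gs. reg. Qed.
Lemma gfs_cont be : continuity (fun y => gs y * sin (be * y)).
Proof. unfold gs. reg. Qed.

Lemma shift_exp al y : exp (al ^ 2 / 2) * gs (y + - al) = exp (- (y ^ 2 / 2) + al * y).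
Proof. unfold gs. rewrite <- exp_plus. f_equal. field. Qed.

Lemma gc_imp al be : Rimp (gc al be) (sqrt (2 * PI) * exp ((al ^ 2 - be ^ 2) / 2) * cos (al * be)).
Proof.
 set (h := fun u => exp (al ^ 2 / 2) * (cos (al * be) * (gs u * cos (be * u)) + (- sin (al * be)) * (gs u * sin (be * u)))).
 assert (Hh : Rimp h (exp (al ^ 2 / 2) * (cos (al * be) * (sqrt (2 * PI) * exp (- (be ^ 2 / 2))) + (- sin (al * be)) * 0))).
 { apply Rimp_scal. unfold gs; reg. apply Rimp_lin. unfold gs; reg. apply gfs_cont.
   apply Rimp_scal. apply gfc_cont. apply fc_imp. apply fs_imp. }
 apply Rimp_shift with (c := - al) in Hh; [| unfold h, gs; reg].
 replace (sqrt (2 * PI) * exp ((al ^ 2 - be ^ 2) / 2) * cos (al * be)) with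
   (exp (al ^ 2 / 2) * (cos (al * be) * (sqrt (2 * PI) * exp (- (be ^ 2 / 2))) + - sin (al * be) * 0)).
 2:{ replace ((al ^ 2 - be ^ 2) / 2) with (al ^ 2 / 2 + - (be ^ 2 / 2)) by field. rewrite exp_plus. ring. }
 apply Rimp_ext with (2 := Hh). intros y. unfold h, gc.
 rewrite <- (shift_exp al y). replace (cos (be * y)) with (cos (al * be + be * (y + - al))) by (f_equal; ring).
 rewrite cos_plus. ring. Qed.

Lemma gsi_imp al be : Rimp (gsi al be) (sqrt (2 * PI) * exp ((al ^ 2 - be ^ 2) / 2) * sin (al * be)).
Proof.
 set (h := fun u => exp (al ^ 2 / 2) * (sin (al * be) * (gs u * cos (be * u)) + (cos (al * be)) * (gs u * sin (be * u)))).
 assert (Hh : Rimp h (exp (al ^ 2 / 2) * (sin (al * be) * (sqrt (2 * PI) * exp (- (be ^ 2 / 2))) + (cos (al * be)) * 0))).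
 { apply Rimp_scal. unfold gs; reg. apply Rimp_lin. unfold gs; reg. apply gfs_cont.
   apply Rimp_scal. apply gfc_cont. apply fc_imp. apply fs_imp. }
 apply Rimp_shift with (c := - al) in Hh; [| unfold h, gs; reg].
 replace (sqrt (2 * PI) * exp ((al ^ 2 - be ^ 2) / 2) * sin (al * be)) with
   (exp (al ^ 2 / 2) * (sin (al * be) * (sqrt (2 * PI) * exp (- (be ^ 2 / 2))) + cos (al * be) * 0)).
 2:{ replace ((al ^ 2 - be ^ 2) / 2) with (al ^ 2 / 2 + - (be ^ 2 / 2)) by field. rewrite exp_plus. ring. }
 apply Rimp_ext with (2 := Hh). intros y. unfold h, gsi.
 rewrite <- (shift_exp al y). replace (sin (be * y)) with (sin (al * be + be * (y + - al))) by (f_equal; ring).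
 rewrite sin_plus. ring. Qed.

Definition ge (al y : R) := exp (- (y ^ 2 / 2) + al * y).
Lemma ge_cont al : continuity (ge al).
Proof. unfold ge; reg. Qed.
Lemma ge_imp al : Rimp (ge al) (sqrt (2 * PI) * exp (al ^ 2 / 2)).
Proof. assert (H := gc_imp al 0). unfold gc in H. rewrite Rmult_0_r, cos_0, Rmult_1_r in H.
 replace ((al ^ 2 - 0 ^ 2) / 2) with (al ^ 2 / 2) in H by field.
 apply Rimp_ext with (2 := H). intros y. unfold ge. rewrite Rmult_0_l, cos_0. ring. Qed.

Lemma Cexp_add z w : Cexp (Cadd z w) = Cmul (Cexp z) (Cexp w).
Proof. destruct z as [a b], w as [c d]. unfold Cexp, Cadd, Cmul; simpl.
 rewrite exp_plus, cos_plus, sin_plus. f_equal; ring. Qed.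

Lemma Cpow_mul z w n : Cpow (Cmul z w) n = Cmul (Cpow z n) (Cpow w n).
Proof. induction n. simpl. unfold Cmul; simpl. f_equal; ring.
 simpl. rewrite IHn. destruct z as [a b], w as [c d], (Cpow (a,b) n) as [e f], (Cpow (c,d) n) as [g h].
 unfold Cmul; simpl. f_equal; ring. Qed.

Lemma Cexp_ext z w : fst z = fst w -> snd z = snd w -> Cexp z = Cexp w.
Proof. destruct z, w; simpl; intros -> ->; auto. Qed.

Lemma Cpow_exp z n : Cpow (Cexp z) n = Cexp (Cscale (INR n) z).
Proof. induction n. simpl. unfold Cexp, Cscale; simpl. rewrite !Rmult_0_l, exp_0, cos_0, sin_0. f_equal; ring.
 simpl Cpow. rewrite IHn, <- Cexp_add. apply Cexp_ext; destruct z; unfold Cadd, Cscale; cbn [fst snd]; rewrite S_INR; ring. Qed.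

Lemma Cpow_bound t n : Rabs (fst (Cpow t n)) + Rabs (snd (Cpow t n)) <= (Rabs (fst t) + Rabs (snd t)) ^ n.
Proof. induction n. simpl. rewrite Rabs_R1, Rabs_R0. lra.
 simpl Cpow. destruct t as [a b]. destruct (Cpow (a, b) n) as [c d]. simpl in *. unfold Cmul; simpl.
 pose proof (Rabs_triang (a*c) (- (b*d))). pose proof (Rabs_triang (a*d) (b*c)).
 rewrite Rabs_Ropp, !Rabs_mult in H. rewrite !Rabs_mult in H0.
 pose proof (Rabs_pos a). pose proof (Rabs_pos b). pose proof (Rabs_pos c). pose proof (Rabs_pos d).
 unfold Rminus. apply Rle_trans with ((Rabs a + Rabs b) * (Rabs c + Rabs d)). nra.
 apply Rmult_le_compat_l; lra. Qed.

Lemma Cmul_exp_bound c u v : Rabs (fst (Cmul c (Cexp (u, v)))) <= (Rabs (fst c) + Rabs (snd c)) * exp u /\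
  Rabs (snd (Cmul c (Cexp (u, v)))) <= (Rabs (fst c) + Rabs (snd c)) * exp u.
Proof. destruct c as [a b]. unfold Cmul, Cexp; simpl.
 pose proof (exp_pos u). pose proof (COS_bound v). pose proof (SIN_bound v).
 assert (Rabs (cos v) <= 1) by (apply Rabs_le; lra). assert (Rabs (sin v) <= 1) by (apply Rabs_le; lra).
 pose proof (Rabs_pos a). pose proof (Rabs_pos b). pose proof (Rabs_pos (cos v)). pose proof (Rabs_pos (sin v)).
 assert (A1 : exp u * Rabs (cos v) <= exp u) by (rewrite <- (Rmult_1_r (exp u)) at 2; apply Rmult_le_compat_l; lra).
 assert (A2 : exp u * Rabs (sin v) <= exp u) by (rewrite <- (Rmult_1_r (exp u)) at 2; apply Rmult_le_compat_l; lra).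
 assert (B1 := Rmult_le_compat_l (Rabs a) _ _ H4 A1). assert (B2 := Rmult_le_compat_l (Rabs b) _ _ H5 A2).
 assert (B3 := Rmult_le_compat_l (Rabs a) _ _ H4 A2). assert (B4 := Rmult_le_compat_l (Rabs b) _ _ H5 A1).
 split.
 - unfold Rminus. eapply Rle_trans. apply Rabs_triang. rewrite Rabs_Ropp, !Rabs_mult, (Rabs_right (exp u)) by lra. lra.
 - eapply Rle_trans. apply Rabs_triang. rewrite !Rabs_mult, (Rabs_right (exp u)) by lra. lra. Qed.

Lemma Cnorm_le a b : Cnorm (a, b) <= Rabs a + Rabs b.
Proof. unfold Cnorm; simpl. rewrite <- (sqrt_square (Rabs a + Rabs b)) by (pose proof (Rabs_pos a); pose proof (Rabs_pos b); lra).
 apply sqrt_le_1_alt. replace (a * a) with (Rabs a ^ 2) by (rewrite pow2_abs; ring).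
 replace (b * b) with (Rabs b ^ 2) by (rewrite pow2_abs; ring). pose proof (Rabs_pos a). pose proof (Rabs_pos b). nra. Qed.

Lemma Cpartial_eq (a : nat -> Cx) n : Cpartial a n = (sum_f_R0 (fun i => fst (a i)) n, sum_f_R0 (fun i => snd (a i)) n).
Proof. induction n. simpl. destruct (a 0%nat); auto. simpl. rewrite IHn. unfold Cadd; simpl. auto. Qed.

Lemma Csums_of (a : nat -> Cx) lr li : Un_cv (fun N => sum_f_R0 (fun n => fst (a n)) N) lr ->
  Un_cv (fun N => sum_f_R0 (fun n => snd (a n)) N) li -> Csums a (lr, li).
Proof. intros H1 H2 eps He. destruct (H1 (eps/2) ltac:(lra)) as [N1 HN1]. destruct (H2 (eps/2) ltac:(lra)) as [N2 HN2].
 exists (N1 + N2)%nat. intros n Hn. rewrite Cpartial_eq. unfold Cadd, Copp; simpl.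
 eapply Rle_lt_trans. apply Cnorm_le. specialize (HN1 n ltac:(lia)). specialize (HN2 n ltac:(lia)).
 unfold Rdist in *. unfold Rminus in *. lra. Qed.

Lemma cv_lin2 (a b : nat -> R) la lb c d : Un_cv (fun N => sum_f_R0 a N) la -> Un_cv (fun N => sum_f_R0 b N) lb ->
  Un_cv (fun N => sum_f_R0 (fun n => c * a n + d * b n) N) (c * la + d * lb).
Proof. intros Ha Hb. replace (fun N => sum_f_R0 (fun n => c * a n + d * b n) N) with
   (fun N => sum_f_R0 (fun n => c * a n) N + sum_f_R0 (fun n => d * b n) N).
 apply (CV_plus (fun N => sum_f_R0 (fun n => c * a n) N) (fun N => sum_f_R0 (fun n => d * b n) N)); apply cv_sum_scal_l; auto.
 apply functional_extensionality; intros N. rewrite <- plus_sum. auto. Qed.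

Lemma exp_INR_mul m a : exp (INR m * a) = exp a ^ m.
Proof. induction m. simpl. rewrite Rmult_0_l, exp_0; auto. rewrite S_INR. simpl pow.
 rewrite <- IHm, <- exp_plus. f_equal; ring. Qed.

Lemma exists_comp (a b : nat -> R) : (forall n, 0 <= a n <= b n) -> (exists l, Un_cv (fun N => sum_f_R0 b N) l) ->
  exists l, Un_cv (fun N => sum_f_R0 a N) l.
Proof. intros H [l Hl]. destruct (Rseries_CV_comp a b H (exist _ l Hl)) as [l' Hl']. exists l'; auto. Qed.

Lemma geom_half : Un_cv (fun N => sum_f_R0 (fun n => (1/2) ^ n) N) 2.
Proof. assert (H := GP_infinite (1/2) ltac:(rewrite Rabs_right; lra)). unfold Pser, infinite_sum in H.
 replace (/ (1 - 1/2)) with 2 in H by field. intros eps He. destruct (H eps He) as [N HN]. exists N. intros n Hn.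
 specialize (HN n Hn). replace (sum_f_R0 (fun n => (1/2)^n) n) with (sum_f_R0 (fun n0 => 1 * (1/2)^n0) n); auto.
 apply sum_eq; intros; ring. Qed.

Lemma sq_geom lam mu : 0 <= lam < 1 -> 0 <= mu -> exists l, Un_cv (fun N => sum_f_R0 (fun n => lam ^ (n * n) * mu ^ n) N) l.
Proof. intros Hl Hm.
 destruct (pow_lt_1_zero lam ltac:(rewrite Rabs_right; lra) (/ (2 * (mu + 1))) ltac:(apply Rinv_0_lt_compat; lra)) as [N0 HN0].
 set (mu' := Rmax 1 mu). assert (Hm1 : 1 <= mu') by apply Rmax_l. assert (Hm2 : mu <= mu') by apply Rmax_r.
 set (C := (2 * mu') ^ N0). assert (HC1 : 1 <= C) by (unfold C; apply pow_R1_Rle; lra).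
 apply exists_comp with (fun n => C * (1/2) ^ n).
 2:{ exists (C * 2). apply cv_sum_scal_l, geom_half. }
 intros n. assert (Hp : 0 <= lam ^ (n * n) * mu ^ n) by (apply Rmult_le_pos; apply pow_le; lra). split; auto.
 rewrite pow_mult, <- Rpow_mult_distr.
 assert (Hln : 0 <= lam ^ n <= 1) by (split; [apply pow_le; lra | rewrite <- (pow1 n); apply pow_incr; lra]).
 destruct (Compare_dec.le_lt_dec N0 n) as [Hn|Hn].
 - specialize (HN0 n Hn). rewrite Rabs_right in HN0 by (apply Rle_ge, pow_le; lra).
   assert (lam ^ n * mu <= 1/2). { apply Rle_trans with (/ (2 * (mu + 1)) * mu). apply Rmult_le_compat_r; lra.
     apply (Rmult_le_reg_l (2 * (mu + 1))). lra. rewrite <- Rmult_assoc, Rinv_r by lra. lra. }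
   apply Rle_trans with ((1/2)^n). apply pow_incr. split; [apply Rmult_le_pos; lra | auto].
   pose proof (pow_le (1/2) n ltac:(lra)). nra.
 - apply Rle_trans with (mu' ^ N0).
   apply Rle_trans with (mu' ^ n). apply pow_incr. split. apply Rmult_le_pos; lra. nra.
   apply Rle_pow; auto; lia.
   unfold C. rewrite Rpow_mult_distr.
   assert (1 <= 2 ^ N0 * (1/2) ^ n). { replace N0 with (n + (N0 - n))%nat by lia. rewrite pow_add.
     replace (2 ^ n * 2 ^ (N0 - n) * (1/2)^n) with ((2 * (1/2)) ^ n * 2 ^ (N0 - n)) by (rewrite Rpow_mult_distr; ring).
     replace (2 * (1/2)) with 1 by field. rewrite pow1, Rmult_1_l. apply pow_R1_Rle; lra. }
   pose proof (pow_le mu' N0 ltac:(lra)). nra. Qed.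

Lemma cont_lin2 c d f g : continuity f -> continuity g -> continuity (fun y => c * f y + d * g y).
Proof. intros Hf Hg y. apply (continuity_pt_plus (fun y => c * f y) (fun y => d * g y)).
 apply (continuity_pt_scal f c y (Hf y)). apply (continuity_pt_scal g d y (Hg y)). Qed.

Section Main.
Variables (p k q zeta x : R) (rho t : Cx).
Hypothesis hp : 0 < p.
Hypothesis hk : 0 < k.
Hypothesis hpq0 : 0 < p * q.
Hypothesis hpq1 : p * q < 1.
Hypothesis hcond : p * exp (- ((2 * zeta - Cim rho ^ 2) * k ^ 2)) < 1.

Lemma pq_bound n : 0 < pqfact p q n /\ (1 - p * q) ^ n <= pqfact p q n * sqrt p ^ (n * n + n).
Proof. induction n. simpl. lra.
 destruct IHn as [H1 H2]. simpl pqfact.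
 set (F := / p ^ S n - q ^ S n).
 assert (Hps : 0 < p ^ S n) by (apply pow_lt; auto).
 assert (HF : 1 - p * q <= F * p ^ S n).
 { unfold F. rewrite Rmult_minus_distr_r, Rinv_l by lra. rewrite <- Rpow_mult_distr, Rmult_comm.
   simpl pow. assert ((q * p) ^ n <= 1). { rewrite <- (pow1 n). apply pow_incr; lra. } assert (0 < q * p) by lra. nra. }
 assert (HF0 : 0 < F). { assert (0 < F * p ^ S n) by lra. apply (Rmult_lt_reg_r (p ^ S n)); auto. lra. }
 split. apply Rmult_lt_0_compat; auto.
 replace (S n * S n + S n)%nat with ((n * n + n) + 2 * S n)%nat by lia.
 rewrite pow_add, pow_mult. replace (sqrt p ^ 2) with p by (simpl; rewrite Rmult_1_r, sqrt_sqrt; lra).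

 assert (0 <= (1 - p * q) ^ n) by (apply pow_le; lra).
 apply Rle_trans with ((pqfact p q n * sqrt p ^ (n * n + n)) * (F * p ^ S n)).
 - replace ((1 - p * q) ^ S n) with ((1 - p * q) ^ n * (1 - p * q)) by (simpl; ring). apply Rmult_le_compat; lra.
 - right. unfold F. simpl. ring. Qed.

Lemma inv_pq_bound n : / pqfact p q n <= sqrt p ^ (n * n + n) / (1 - p * q) ^ n.
Proof. destruct (pq_bound n) as [H1 H2]. assert (0 < (1 - p * q) ^ n) by (apply pow_lt; lra).
 apply (Rmult_le_reg_r ((1 - p * q) ^ n)); auto. unfold Rdiv. rewrite Rmult_assoc, Rinv_l by lra.
 apply (Rmult_le_reg_l (pqfact p q n)); auto. rewrite <- Rmult_assoc, Rinv_r by lra. lra. Qed.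

Definition TT := Rabs (fst t) + Rabs (snd t).
Definition cr n := / pqfact p q n * exp (- (k ^ 2 * INR n ^ 2) * zeta) * fst (Cpow t n).
Definition ci n := / pqfact p q n * exp (- (k ^ 2 * INR n ^ 2) * zeta) * snd (Cpow t n).
Definition cn n := Rabs (cr n) + Rabs (ci n).
Definition c2 := k ^ 2 * snd rho ^ 2 / 2.

Lemma cn_bound n : cn n <= / pqfact p q n * exp (- (k ^ 2 * INR n ^ 2) * zeta) * TT ^ n.
Proof. unfold cn, cr, ci, TT. destruct (pq_bound n) as [H1 _].
 assert (0 < / pqfact p q n * exp (- (k ^ 2 * INR n ^ 2) * zeta)) by (apply Rmult_lt_0_compat; [apply Rinv_0_lt_compat; auto | apply exp_pos]).
 set (K := / pqfact p q n * exp (- (k ^ 2 * INR n ^ 2) * zeta)) in *.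
 rewrite !(Rabs_mult K), (Rabs_right K) by lra. rewrite <- Rmult_plus_distr_l.
 apply Rmult_le_compat_l. lra. apply Cpow_bound. Qed.

Lemma cn_nonneg n : 0 <= cn n.
Proof. unfold cn. pose proof (Rabs_pos (cr n)). pose proof (Rabs_pos (ci n)). lra. Qed.

Lemma SUMB nu : 0 <= nu -> exists l, Un_cv (fun N => sum_f_R0 (fun n => cn n * exp (INR n ^ 2 * c2) * exp (INR n * nu)) N) l.
Proof. intros Hnu.
 set (d := c2 - k ^ 2 * zeta). set (lam := sqrt p * exp d). set (mu := sqrt p * TT * exp nu / (1 - p * q)).
 assert (Hsp : 0 < sqrt p) by (apply sqrt_lt_R0; auto).
 assert (HTT : 0 <= TT) by (unfold TT; pose proof (Rabs_pos (fst t)); pose proof (Rabs_pos (snd t)); lra).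
 assert (Hlam : 0 <= lam < 1).
 { split. unfold lam. pose proof (exp_pos d). nra.
   assert (lam * lam < 1). { unfold lam. replace (sqrt p * exp d * (sqrt p * exp d)) with ((sqrt p * sqrt p) * (exp d * exp d)) by ring.
     rewrite sqrt_sqrt by lra. rewrite <- exp_plus. replace (d + d) with (- ((2 * zeta - Cim rho ^ 2) * k ^ 2)); auto.
     unfold d, c2, Cim. field. }
   pose proof (exp_pos d). assert (0 <= lam) by (unfold lam; nra). nra. }
 assert (Hmu : 0 <= mu). { unfold mu. apply Rmult_le_pos. pose proof (exp_pos nu). apply Rmult_le_pos; [apply Rmult_le_pos|]; lra.
   left; apply Rinv_0_lt_compat; lra. }
 apply exists_comp with (fun n => lam ^ (n * n) * mu ^ n). 2: apply sq_geom; auto.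
 intros n. pose proof (cn_nonneg n). pose proof (exp_pos (INR n ^ 2 * c2)). pose proof (exp_pos (INR n * nu)).
 split. apply Rmult_le_pos; [apply Rmult_le_pos|]; lra.
 apply Rle_trans with (/ pqfact p q n * exp (- (k ^ 2 * INR n ^ 2) * zeta) * TT ^ n * exp (INR n ^ 2 * c2) * exp (INR n * nu)).
 apply Rmult_le_compat_r; [lra|]. apply Rmult_le_compat_r; [lra|]. apply cn_bound.
 apply Rle_trans with (sqrt p ^ (n * n + n) / (1 - p * q) ^ n * exp (- (k ^ 2 * INR n ^ 2) * zeta) * TT ^ n * exp (INR n ^ 2 * c2) * exp (INR n * nu)).
 { repeat apply Rmult_le_compat_r; try lra. apply pow_le; auto. left; apply exp_pos. apply inv_pq_bound. }
 right. unfold lam, mu. unfold Rdiv. rewrite !Rpow_mult_distr, pow_inv.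
 rewrite <- (exp_INR_mul n nu), <- (exp_INR_mul (n * n) d). rewrite pow_add, mult_INR.
 assert (E : exp (- (k ^ 2 * INR n ^ 2) * zeta) * exp (INR n ^ 2 * c2) = exp (INR n * INR n * d)) by (rewrite <- exp_plus; f_equal; unfold d; ring).
 rewrite <- E. field. apply pow_nonzero; lra. Qed.

Definition al n := - (INR n * k * snd rho).
Definition be n := x + INR n * k * fst rho.
Definition zf y := Cmul t (Cexp (Cscale (k * y) (Cmul Ci rho))).
Definition Et n y := Eterm k p q (RtoC zeta) (zf y) n.
Definition gaussC y : Cx := Cexp (- (y ^ 2 / 2), x * y).
Definition fn n y := Cmul (gaussC y) (Et n y).

Lemma E0_eq n : Cexp (Cscale (- (k ^ 2 * INR n ^ 2)) (RtoC zeta)) = Cexp (- (k ^ 2 * INR n ^ 2) * zeta, 0).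
Proof. apply Cexp_ext; unfold Cscale, RtoC; simpl; ring. Qed.

Lemma Cexp_real a : Cexp (a, 0) = (exp a, 0).
Proof. unfold Cexp; simpl. rewrite cos_0, sin_0. f_equal; ring. Qed.

Lemma Et_rep n y : Et n y = Cmul (cr n, ci n) (Cexp (al n * y, INR n * k * fst rho * y)).
Proof. unfold Et, Eterm, zf. rewrite Cpow_mul, Cpow_exp, E0_eq, Cexp_real.
 replace (Cexp (Cscale (INR n) (Cscale (k * y) (Cmul Ci rho)))) with (Cexp (al n * y, INR n * k * fst rho * y)).
 2:{ apply Cexp_ext; unfold al, Cscale, Cmul, Ci; simpl; ring. }
 unfold cr, ci. destruct (Cpow t n) as [a b]. destruct (Cexp (al n * y, INR n * k * fst rho * y)) as [c d].
 unfold Cscale, Cmul; simpl. f_equal; ring. Qed.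

Lemma fn_rep n y : fn n y = Cmul (cr n, ci n) (Cexp (- (y ^ 2 / 2) + al n * y, be n * y)).
Proof. unfold fn. rewrite Et_rep.
 replace (Cexp (- (y ^ 2 / 2) + al n * y, be n * y)) with (Cmul (gaussC y) (Cexp (al n * y, INR n * k * fst rho * y))).
 2:{ unfold gaussC. rewrite <- Cexp_add. apply Cexp_ext; unfold Cadd, be; simpl; ring. }
 destruct (gaussC y) as [a b]. destruct (Cexp (al n * y, INR n * k * fst rho * y)) as [c d].
 unfold Cmul; simpl. f_equal; ring. Qed.

Lemma fn_fst n y : fst (fn n y) = cr n * gc (al n) (be n) y + (- ci n) * gsi (al n) (be n) y.
Proof. rewrite fn_rep. unfold Cmul, Cexp, gc, gsi; simpl. ring. Qed.
Lemma fn_snd n y : snd (fn n y) = cr n * gsi (al n) (be n) y + ci n * gc (al n) (be n) y.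
Proof. rewrite fn_rep. unfold Cmul, Cexp, gc, gsi; simpl. ring. Qed.

Lemma Et_bound n y : Rabs (fst (Et n y)) <= cn n * exp (INR n ^ 2 * c2) * exp (INR n * (k * Rabs (snd rho) * Rabs y)) /\ Rabs (snd (Et n y)) <= cn n * exp (INR n ^ 2 * c2) * exp (INR n * (k * Rabs (snd rho) * Rabs y)).
Proof. rewrite Et_rep. destruct (Cmul_exp_bound (cr n, ci n) (al n * y) (INR n * k * fst rho * y)) as [H1 H2].
 cbn [fst snd] in H1, H2. fold (cn n) in H1, H2.
 assert (E : cn n * exp (al n * y) <= cn n * exp (INR n ^ 2 * c2) * exp (INR n * (k * Rabs (snd rho) * Rabs y))).
 { pose proof (cn_nonneg n). rewrite Rmult_assoc. apply Rmult_le_compat_l; auto.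
   rewrite <- exp_plus. apply exp_le. unfold al, c2.
   assert (0 <= INR n ^ 2 * (k ^ 2 * snd rho ^ 2 / 2)) by (pose proof (pow2_ge_0 (INR n)); pose proof (pow2_ge_0 k); pose proof (pow2_ge_0 (snd rho)); apply Rmult_le_pos; [lra|]; apply Rmult_le_pos; [apply Rmult_le_pos|]; lra).
   assert (- (INR n * k * snd rho) * y <= INR n * (k * Rabs (snd rho) * Rabs y)).
   { replace (INR n * (k * Rabs (snd rho) * Rabs y)) with (Rabs (INR n * k * snd rho * y)).
     rewrite <- Rabs_Ropp. eapply Rle_trans; [|apply Rle_abs]. right; ring.
     rewrite !Rabs_mult, (Rabs_right (INR n)), (Rabs_right k) by (try apply Rle_ge, pos_INR; lra). ring. }
   lra. }
 split; lra. Qed.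

Lemma gR_ex y : exists l, Un_cv (fun N => sum_f_R0 (fun n => fst (Et n y)) N) l.
Proof. destruct (SUMB (k * Rabs (snd rho) * Rabs y)) as [B HB].
 pose proof (Rabs_pos (snd rho)); pose proof (Rabs_pos y). apply Rmult_le_pos; [apply Rmult_le_pos|]; lra.
 eapply abs_conv; [|exact HB]. intros n; simpl; apply Et_bound. Qed.
Lemma gI_ex y : exists l, Un_cv (fun N => sum_f_R0 (fun n => snd (Et n y)) N) l.
Proof. destruct (SUMB (k * Rabs (snd rho) * Rabs y)) as [B HB].
 pose proof (Rabs_pos (snd rho)); pose proof (Rabs_pos y). apply Rmult_le_pos; [apply Rmult_le_pos|]; lra.
 eapply abs_conv; [|exact HB]. intros n; simpl; apply Et_bound. Qed.

Definition gR y := proj1_sig (constructive_indefinite_description _ (gR_ex y)).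
Definition gI y := proj1_sig (constructive_indefinite_description _ (gI_ex y)).
Lemma gR_spec y : Un_cv (fun N => sum_f_R0 (fun n => fst (Et n y)) N) (gR y).
Proof. unfold gR. destruct (constructive_indefinite_description _ (gR_ex y)); auto. Qed.
Lemma gI_spec y : Un_cv (fun N => sum_f_R0 (fun n => snd (Et n y)) N) (gI y).
Proof. unfold gI. destruct (constructive_indefinite_description _ (gI_ex y)); auto. Qed.

Definition gg y : Cx := (gR y, gI y).
Definition FF y := Cmul (gaussC y) (gg y).


Lemma cont_scal c f : continuity f -> continuity (fun y => c * f y).
Proof. intros Hf y. apply (continuity_pt_scal f c y (Hf y)). Qed.

Lemma fn_bound n y Y : Rabs y <= Y ->
  (Rabs (fst (fn n y)) <= cn n * ge (al n) y /\ Rabs (snd (fn n y)) <= cn n * ge (al n) y) /\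
  cn n * ge (al n) y <= cn n * exp (INR n ^ 2 * c2) * exp (INR n * (k * Rabs (snd rho) * Y)).
Proof. intros Hy. rewrite fn_rep. destruct (Cmul_exp_bound (cr n, ci n) (- (y ^ 2 / 2) + al n * y) (be n * y)) as [H1 H2].
 cbn [fst snd] in H1, H2. fold (cn n) in H1, H2. unfold ge. split. split; auto.
 pose proof (cn_nonneg n). rewrite Rmult_assoc. apply Rmult_le_compat_l; auto.
 rewrite <- exp_plus. apply exp_le. unfold al, c2.
 assert (0 <= INR n ^ 2 * (k ^ 2 * snd rho ^ 2 / 2)) by (pose proof (pow2_ge_0 (INR n)); pose proof (pow2_ge_0 k); pose proof (pow2_ge_0 (snd rho)); apply Rmult_le_pos; [lra|]; apply Rmult_le_pos; [apply Rmult_le_pos|]; lra).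
 assert (- (INR n * k * snd rho) * y <= INR n * (k * Rabs (snd rho) * Y)).
 { apply Rle_trans with (INR n * (k * Rabs (snd rho) * Rabs y)).
   replace (INR n * (k * Rabs (snd rho) * Rabs y)) with (Rabs (INR n * k * snd rho * y)).
   rewrite <- Rabs_Ropp. eapply Rle_trans; [|apply Rle_abs]. right; ring.
   rewrite !Rabs_mult, (Rabs_right (INR n)), (Rabs_right k) by (try apply Rle_ge, pos_INR; lra). ring.
   apply Rmult_le_compat_l. apply pos_INR. apply Rmult_le_compat_l; auto. pose proof (Rabs_pos (snd rho)); nra. }
 pose proof (pow2_ge_0 y). lra. Qed.

Definition GC n := sqrt (2 * PI) * exp ((al n ^ 2 - be n ^ 2) / 2) * cos (al n * be n).
Definition GS n := sqrt (2 * PI) * exp ((al n ^ 2 - be n ^ 2) / 2) * sin (al n * be n).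
Definition IR n := cr n * GC n + (- ci n) * GS n.
Definition II n := cr n * GS n + ci n * GC n.
Definition betaN n := cn n * (sqrt (2 * PI) * exp (al n ^ 2 / 2)).

Lemma betaN_sum : exists B, Un_cv (fun N => sum_f_R0 betaN N) B.
Proof. destruct (SUMB 0 ltac:(lra)) as [B HB]. exists (sqrt (2 * PI) * B).
 replace betaN with (fun n => sqrt (2 * PI) * (cn n * exp (INR n ^ 2 * c2) * exp (INR n * 0))).
 apply cv_sum_scal_l; auto.
 apply functional_extensionality; intros n. unfold betaN. rewrite Rmult_0_r, exp_0.
 replace (al n ^ 2 / 2) with (INR n ^ 2 * c2) by (unfold al, c2; field). ring. Qed.

Lemma Hb_gen (h : R -> R) n a b v : a <= b -> (forall y, Rabs (h y) <= cn n * ge (al n) y) -> is_RInt h a b v -> Rabs v <= betaN n.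
Proof. intros Hab Hh Hv.
 assert (Hc : continuity (fun y => cn n * ge (al n) y)) by (apply cont_scal, ge_cont).
 destruct (cont_is_RInt _ a b Hc) as [w Hw].
 eapply Rle_trans. apply (is_RInt_abs_le h (fun y => cn n * ge (al n) y) a b v w Hab); auto.
 apply Rimp_le with (fun y => cn n * ge (al n) y) a b; auto.
 intros y. apply Rmult_le_pos. apply cn_nonneg. left; apply exp_pos.
 apply Rimp_scal. apply ge_cont. apply ge_imp. Qed.

Lemma Hcomp_gen (sel : Cx -> R) : (forall z, sel z = fst z \/ sel z = snd z) ->
  forall Rr, exists (m : nat -> R) (mS : R), Un_cv (fun N => sum_f_R0 m N) mS /\
   forall n y, Rabs y <= Rr -> Rabs (sel (fn n y)) <= m n.
Proof. intros Hsel Rr. assert (HY : 0 <= k * Rabs (snd rho) * Rabs Rr) by (pose proof (Rabs_pos (snd rho)); pose proof (Rabs_pos Rr); apply Rmult_le_pos; [apply Rmult_le_pos|]; lra).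
 destruct (SUMB _ HY) as [B HB]. eexists; exists B; split. exact HB.
 intros n y Hy. destruct (fn_bound n y (Rabs Rr) ltac:(eapply Rle_trans; [apply Hy| apply Rle_abs])) as [[H1 H2] H3].
 destruct (Hsel (fn n y)) as [-> | ->]; lra. Qed.

Lemma tan_re : continuity (fun y => fst (FF y)) /\ exists S, Un_cv (fun N => sum_f_R0 IR N) S /\ Rimp (fun y => fst (FF y)) S.
Proof. destruct betaN_sum as [B HB].
 apply (tannery (fun n y => fst (fn n y)) (fun y => fst (FF y)) IR betaN B).
 - intros n. replace (fun y => fst (fn n y)) with (fun y => cr n * gc (al n) (be n) y + (- ci n) * gsi (al n) (be n) y).
   apply cont_lin2. apply gc_cont. apply gsi_cont. apply functional_extensionality; intros y; symmetry; apply fn_fst.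
 - intros y. replace (fun n => fst (fn n y)) with (fun n => fst (gaussC y) * fst (Et n y) + (- snd (gaussC y)) * snd (Et n y)).
   replace (fst (FF y)) with (fst (gaussC y) * gR y + (- snd (gaussC y)) * gI y).
   apply cv_lin2. apply gR_spec. apply gI_spec.
   unfold FF, gg, Cmul. simpl. ring.
   apply functional_extensionality; intros n. unfold fn, Cmul. simpl. ring.
 - apply Hcomp_gen. intros; left; auto.
 - intros n. apply Rimp_ext with (fun y => cr n * gc (al n) (be n) y + (- ci n) * gsi (al n) (be n) y).
   intros y; symmetry; apply fn_fst. unfold IR.
   apply Rimp_lin. apply cont_scal, gc_cont. apply gsi_cont. apply Rimp_scal. apply gc_cont. apply gc_imp. apply gsi_imp.
 - intros n a b v Hab Hv. apply (Hb_gen (fun y => fst (fn n y)) n a b v Hab); auto. intros y. apply (fn_bound n y (Rabs y) (Rle_refl _)).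
 - exact HB. Qed.

Lemma tan_im : continuity (fun y => snd (FF y)) /\ exists S, Un_cv (fun N => sum_f_R0 II N) S /\ Rimp (fun y => snd (FF y)) S.
Proof. destruct betaN_sum as [B HB].
 apply (tannery (fun n y => snd (fn n y)) (fun y => snd (FF y)) II betaN B).
 - intros n. replace (fun y => snd (fn n y)) with (fun y => cr n * gsi (al n) (be n) y + ci n * gc (al n) (be n) y).
   apply cont_lin2. apply gsi_cont. apply gc_cont. apply functional_extensionality; intros y; symmetry; apply fn_snd.
 - intros y. replace (fun n => snd (fn n y)) with (fun n => snd (gaussC y) * fst (Et n y) + fst (gaussC y) * snd (Et n y)).
   replace (snd (FF y)) with (snd (gaussC y) * gR y + fst (gaussC y) * gI y).
   apply cv_lin2. apply gR_spec. apply gI_spec.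
   unfold FF, gg, Cmul. simpl. ring.
   apply functional_extensionality; intros n. unfold fn, Cmul. simpl. ring.
 - apply Hcomp_gen. intros; right; auto.
 - intros n. apply Rimp_ext with (fun y => cr n * gsi (al n) (be n) y + ci n * gc (al n) (be n) y).
   intros y; symmetry; apply fn_snd. unfold II.
   apply Rimp_lin. apply cont_scal, gsi_cont. apply gc_cont. apply Rimp_scal. apply gsi_cont. apply gsi_imp. apply gc_imp.
 - intros n a b v Hab Hv. apply (Hb_gen (fun y => snd (fn n y)) n a b v Hab); auto. intros y. apply (fn_bound n y (Rabs y) (Rle_refl _)).
 - exact HB. Qed.


Definition sL := Cadd (RtoC zeta) (Cscale (/ 2) (Cmul rho rho)).
Definition zL := Cmul t (Cexp (Cscale (- (k * x)) rho)).
Definition Lt n := Eterm k p q sL zL n.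
Definition KK := sqrt (2 * PI) * exp (- (x ^ 2 / 2)).

Lemma PRa s e c A T W : Cscale (s * e) (Cscale c (Cmul A (Cmul T W))) = Cscale (s * c) (Cmul T (Cmul (e, 0) (Cmul A W))).
Proof. destruct A as [a1 a2], T as [t1 t2], W as [w1 w2]. unfold Cscale, Cmul; simpl. f_equal; ring. Qed.

Lemma PRb s c e0 T Q : Cmul (Cscale c (Cmul (e0, 0) T)) (Cscale s Q) = Cscale (s * c) (Cmul T (Cmul (e0, 0) Q)).
Proof. destruct T as [t1 t2], Q as [q1 q2]. unfold Cscale, Cmul; simpl. f_equal; ring. Qed.

Lemma L_id n : Cscale KK (Lt n) = (IR n, II n).
Proof.
 assert (E1 : (IR n, II n) = Cmul (cr n, ci n) (Cscale (sqrt (2 * PI)) (Cexp ((al n ^ 2 - be n ^ 2) / 2, al n * be n)))).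
 { unfold IR, II, GC, GS, Cmul, Cscale, Cexp; simpl. f_equal; ring. }
 assert (E2 : (cr n, ci n) = Cscale (/ pqfact p q n) (Cmul (exp (- (k ^ 2 * INR n ^ 2) * zeta), 0) (Cpow t n))).
 { unfold cr, ci. destruct (Cpow t n) as [a b]. unfold Cscale, Cmul; simpl. f_equal; ring. }
 rewrite E1, E2, PRb, <- Cexp_real, <- Cexp_add.
 unfold Lt, Eterm, zL, KK. rewrite Cpow_mul, Cpow_exp, PRa, <- Cexp_real, <- !Cexp_add.
 rewrite (Rmult_comm (sqrt _) (/ _)). f_equal. f_equal. apply Cexp_ext.
 - unfold Cadd, Cscale, sL, RtoC, Cmul, al, be; simpl. field.
 - unfold Cadd, Cscale, sL, RtoC, Cmul, al, be; simpl. field. Qed.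

Lemma KK_pos : 0 < KK.
Proof. unfold KK. apply Rmult_lt_0_compat. apply sqrt_lt_R0. pose proof PI_RGT_0; lra. apply exp_pos. Qed.

Theorem main_sec : exists (L : Cx) (g : R -> Cx) (I : Cx),
    E_is k p q (Cadd (RtoC zeta) (Cscale (/ 2) (Cmul rho rho)))
         (Cmul t (Cexp (Cscale (- (k * x)) rho))) L /\
    (forall y : R, E_is k p q (RtoC zeta) (Cmul t (Cexp (Cscale (k * y) (Cmul Ci rho)))) (g y)) /\
    C_improper (fun y => Cmul (Cexp (- (y ^ 2 / 2), x * y)) (g y)) I /\
    Cscale (exp (- (x ^ 2 / 2))) L = Cscale (/ sqrt (2 * PI)) I.
Proof.
 destruct tan_re as [HcR [Sr [HSr HRr]]]. destruct tan_im as [HcI [Si [HSi HRi]]].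
 assert (HK := KK_pos).
 exists (/ KK * Sr, / KK * Si), gg, (Sr, Si). split; [|split; [|split]].
 - change (E_is k p q sL zL (/ KK * Sr, / KK * Si)). unfold E_is. apply Csums_of.
   + replace (fun n => fst (Eterm k p q sL zL n)) with (fun n => / KK * IR n). apply cv_sum_scal_l; auto.
     apply functional_extensionality; intros n. fold (Lt n).
     assert (E' : KK * fst (Lt n) = IR n) by (change (KK * fst (Lt n)) with (fst (Cscale KK (Lt n))); rewrite L_id; reflexivity).
     rewrite <- E'. field. lra.
   + replace (fun n => snd (Eterm k p q sL zL n)) with (fun n => / KK * II n). apply cv_sum_scal_l; auto.
     apply functional_extensionality; intros n. fold (Lt n).
     assert (E' : KK * snd (Lt n) = II n) by (change (KK * snd (Lt n)) with (snd (Cscale KK (Lt n))); rewrite L_id; reflexivity).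
     rewrite <- E'. field. lra.
 - intros y. unfold E_is. apply Csums_of. apply gR_spec. apply gI_spec.
 - change (C_improper FF (Sr, Si)). split.
   + intros a b Hab. destruct (cont_is_RInt _ a b HcR) as [v1 Hv1]. destruct (cont_is_RInt _ a b HcI) as [v2 Hv2].
     exists (v1, v2). split; auto.
   + intros eps He. destruct (HRr (eps/2) ltac:(lra)) as [M1 HM1]. destruct (HRi (eps/2) ltac:(lra)) as [M2 HM2].
     exists (Rmax M1 M2). intros a b v Ha Hb [Hv1 Hv2]. pose proof (Rmax_l M1 M2). pose proof (Rmax_r M1 M2).
     destruct v as [v1 v2]. unfold Cadd, Copp; simpl. eapply Rle_lt_trans. apply Cnorm_le.
     specialize (HM1 a b v1 ltac:(lra) ltac:(lra) Hv1). specialize (HM2 a b v2 ltac:(lra) ltac:(lra) Hv2).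
     unfold Rminus in *. lra.
 - unfold Cscale; simpl. unfold KK. assert (0 < sqrt (2 * PI)) by (apply sqrt_lt_R0; pose proof PI_RGT_0; lra).
   pose proof (exp_pos (- (x ^ 2 / 2))). replace (x * (x * 1)) with (x ^ 2) by ring. f_equal; field; lra. Qed.

End Main.

Theorem mainTheorem7 (p k q zeta x : R) (rho t : Cx)
  (hp : 0 < p) (hk : 0 < k) (hq : q = p * exp (- (2 * k ^ 2)))
  (hpq0 : 0 < p * q) (hpq1 : p * q < 1)
  (hcond : p * exp (- ((2 * zeta - Cim rho ^ 2) * k ^ 2)) < 1) :
  exists (L : Cx) (g : R -> Cx) (I : Cx),
    E_is k p q (Cadd (RtoC zeta) (Cscale (/ 2) (Cmul rho rho)))
         (Cmul t (Cexp (Cscale (- (k * x)) rho))) L /\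
    (forall y : R, E_is k p q (RtoC zeta) (Cmul t (Cexp (Cscale (k * y) (Cmul Ci rho)))) (g y)) /\
    C_improper (fun y => Cmul (Cexp (- (y ^ 2 / 2), x * y)) (g y)) I /\
    Cscale (exp (- (x ^ 2 / 2))) L = Cscale (/ sqrt (2 * PI)) I.
Proof. exact (main_sec p k q zeta x rho t hp hk hpq0 hpq1 hcond). Qed.
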